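(* Let $(v,L)$ be a (sufficiently regular) solution on $(t_0,t_1)\times\mathbb T^3$ of the system \[ \begin{aligned} \partial_t v^i&=-\frac{\alpha(1-3K)}{t}v^i - \frac{K}{1+K}t^{-\alpha}(1-|v|^2)\partial_i L-t^{-\alpha}v^j\partial_j v^i +t^{-\alpha}\Big(1-\frac{1-K}{1-K|v|^2}\Big)v^i\partial_j v^j\\ &\quad+t^{-\alpha}\frac{1-K}{1+K}\Big(1-\frac{1-K}{1-K|v|^2}\Big)v^i v^j\partial_j L +\frac{\alpha(1-3K)}{t}\frac{1-K}{1-K|v|^2}|v|^2 v^i,\\ \partial_tL&=-t^{-\alpha}\frac{1+K}{1-K|v|^2}\partial_j v^j-t^{-\alpha}\frac{1-K}{1-K|v|^2} v^j\partial_j L+\frac{\alpha(1+K)}{t}\frac{1-3K}{1-K|v|^2}|v|^2 . \end{aligned} \] Then \[ \begin{aligned} \partial_t\Big(\frac12\int \partial_i v^j\partial^iv_j \Big) &=-\frac{\alpha(1-3K)}{t}\int \partial_i v^j\partial^iv_j -\frac{K}{1+K}t^{-\alpha}\int \partial_i v^j(1-|v|^2)\partial^i\partial_j L \\ &\quad+t^{-\alpha}\int \partial^iv_j\Big(1-\frac{1-K}{1-K|v|^2}\Big)v^j \partial_i\partial_kv^k \\ &\quad+t^{-\alpha}\frac{1-K}{1+K}\int \partial^i v_j\Big(1-\frac{1-K}{1-K|v|^2}\Big)v^j v^k\partial_i\partial_k L +f(t), \end{aligned} \] where $f(t)$ is a perturbative term.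
   Context: Standing assumptions: $\alpha>0$ and $0\le K\le1/3$ constants, $t>1$, $|v|<1/10$. $\int$ denotes $\int_{\mathbb T^3}\cdot\,d^3x$ over the standard flat torus; indices raised/lowered with $\delta$, repeated indices summed, $|v|^2=\delta_{ij}v^iv^j$; $D$ is the spatial gradient. A function $f(t)$ is called perturbative if $|f(t)|\le C\frac{1+t^{1-\alpha}}{t}p(\|DL\|_{L^2},\|Dv\|_{L^2},\|v\|_{L^\infty},\|Dv\|_{L^\infty})$ for a constant $C$ and a polynomial $p$ whose lowest-order terms have degree at least 3. *)

(* Defs.v *)
From Stdlib Require Import Reals List.
From Coquelicot Require Import Coquelicot.
Open Scope R_scope.

(* A scalar field on (time) x (space R^3): F t x1 x2 x3.
   Directions: 0 = time, 1,2,3 = spatial x1,x2,x3. *)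
Definition field := R -> R -> R -> R -> R.

Definition pd (k : nat) (F : field) : field :=
  fun t x y z =>
    match k with
    | 0 => Derive (fun s => F s x y z) t
    | 1 => Derive (fun s => F t s y z) x
    | 2 => Derive (fun s => F t x s z) y
    | _ => Derive (fun s => F t x y s) z
    end.

Definition ex_pd (k : nat) (F : field) (t x y z : R) : Prop :=
  match k with
  | 0 => ex_derive (fun s => F s x y z) t
  | 1 => ex_derive (fun s => F t s y z) x
  | 2 => ex_derive (fun s => F t x s z) y
  | _ => ex_derive (fun s => F t x y s) z
  end.

Definition dx (i : nat) (F : field) : field := pd (S i) F.

Definition iterd (ds : list nat) (F : field) : field := fold_right pd F ds.

Definition smooth_on (t0 t1 : R) (F : field) : Prop :=
  forall ds : list nat, (forall d, In d ds -> (d < 4)%nat) ->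
  forall t x y z, t0 < t < t1 ->
    (forall k, (k < 4)%nat -> ex_pd k (iterd ds F) t x y z) /\
    continuous (fun p : R * R * R * R =>
                  iterd ds F (fst (fst (fst p))) (snd (fst (fst p)))
                             (snd (fst p)) (snd p)) (t, x, y, z).

(* 1-periodic in each spatial variable: a field on the flat torus T^3 *)
Definition periodic (F : field) : Prop :=
  forall t x y z, F t (x + 1) y z = F t x y z /\ F t x (y + 1) z = F t x y z
                  /\ F t x y (z + 1) = F t x y z.

Definition sum3 (f : nat -> R) : R := f 0%nat + f 1%nat + f 2%nat.

Definition int3 (g : R -> R -> R -> R) : R :=
  RInt (fun x => RInt (fun y => RInt (fun z => g x y z) 0 1) 0 1) 0 1.

Definition vfield := nat -> field.

Definition vsq (v : vfield) (t x y z : R) : R :=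
  sum3 (fun j => v j t x y z ^ 2).

Definition Dvsq (v : vfield) (t x y z : R) : R :=
  sum3 (fun i => sum3 (fun j => dx i (v j) t x y z ^ 2)).

Definition DLsq (L : field) (t x y z : R) : R :=
  sum3 (fun i => dx i L t x y z ^ 2).

Definition L2_DL (L : field) (t : R) : R := sqrt (int3 (DLsq L t)).
Definition L2_Dv (v : vfield) (t : R) : R := sqrt (int3 (Dvsq v t)).
Definition sup3 (g : R -> R -> R -> R) : R :=
  real (Lub_Rbar (fun r => exists x y z, r = g x y z)).
Definition Linf_v (v : vfield) (t : R) : R := sup3 (fun x y z => sqrt (vsq v t x y z)).
Definition Linf_Dv (v : vfield) (t : R) : R := sup3 (fun x y z => sqrt (Dvsq v t x y z)).

(* a polynomial in 4 variables, as a list of (coefficient, exponents) *)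
Definition poly4 := list (R * (nat * nat * nat * nat)).

Definition eval4 (p : poly4) (a b c d : R) : R :=
  fold_right (fun m acc =>
    match m with (co, (e1, e2, e3, e4)) => co * a ^ e1 * b ^ e2 * c ^ e3 * d ^ e4 + acc end)
    0 p.

Definition lowdeg_ge3 (p : poly4) : Prop :=
  List.Forall (fun m => match m with (_, (e1, e2, e3, e4)) => (3 <= e1 + e2 + e3 + e4)%nat end) p.

Definition is_solution (al K t0 t1 : R) (v : vfield) (L : field) : Prop :=
  forall t x y z, t0 < t < t1 ->
  let w := vsq v t x y z in
  let ta := Rpower t (- al) in
  let Q := (1 - K) / (1 - K * w) in
  (forall i, (i < 3)%nat ->
    pd 0 (v i) t x y z =
      - (al * (1 - 3 * K) / t) * v i t x y z
      - K / (1 + K) * ta * (1 - w) * dx i L t x y z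
      - ta * sum3 (fun j => v j t x y z * dx j (v i) t x y z)
      + ta * (1 - Q) * v i t x y z * sum3 (fun j => dx j (v j) t x y z)
      + ta * ((1 - K) / (1 + K)) * (1 - Q) * v i t x y z
          * sum3 (fun j => v j t x y z * dx j L t x y z)
      + al * (1 - 3 * K) / t * Q * w * v i t x y z) /\
  pd 0 L t x y z =
      - ta * ((1 + K) / (1 - K * w)) * sum3 (fun j => dx j (v j) t x y z)
      - ta * Q * sum3 (fun j => v j t x y z * dx j L t x y z)
      + al * (1 + K) / t * ((1 - 3 * K) / (1 - K * w)) * w.

Definition energy (v : vfield) (t : R) : R := / 2 * int3 (Dvsq v t).

Definition rhs_terms (al K : R) (v : vfield) (L : field) (t : R) : R :=
  let ta := Rpower t (- al) in
  let Q x y z := (1 - K) / (1 - K * vsq v t x y z) in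
  - (al * (1 - 3 * K) / t) * int3 (Dvsq v t)
  - K / (1 + K) * ta * int3 (fun x y z =>
      sum3 (fun i => sum3 (fun j =>
        dx i (v j) t x y z * (1 - vsq v t x y z) * dx i (dx j L) t x y z)))
  + ta * int3 (fun x y z =>
      sum3 (fun i => sum3 (fun j => sum3 (fun k =>
        dx i (v j) t x y z * (1 - Q x y z) * v j t x y z
          * dx i (dx k (v k)) t x y z))))
  + ta * ((1 - K) / (1 + K)) * int3 (fun x y z =>
      sum3 (fun i => sum3 (fun j => sum3 (fun k =>
        dx i (v j) t x y z * (1 - Q x y z) * v j t x y z * v k t x y z
          * dx i (dx k L) t x y z)))).

(* Main.v *)
Require Import Defs.
From Stdlib Require Import Reals List Lra Lia Classical ClassicalEpsilon ZArith.
From Coquelicot Require Import Coquelicot.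
Open Scope R_scope.

Lemma cont_pair {A B C : UniformSpace} (f : A -> B) (g : A -> C) (x : A) :
  continuous f x -> continuous g x -> continuous (fun a => (f a, g a)) x.
Proof.
  intros Hf Hg.
  apply (continuous_comp_2 f g (fun a b => (a, b))); auto.
  apply continuous_ext with (f := fun p : B * C => p).
  - intros [a b]; reflexivity.
  - apply continuous_id.
Qed.

Lemma cont_fst {A B : UniformSpace} (x : A * B) : continuous (fun p : A * B => fst p) x.
Proof. destruct x; apply continuous_fst. Qed.
Lemma cont_snd {A B : UniformSpace} (x : A * B) : continuous (fun p : A * B => snd p) x.
Proof. destruct x; apply continuous_snd. Qed.

Lemma ball_R (a e b : R) : ball a e b <-> Rabs (b - a) < e.
Proof. reflexivity. Qed.

Lemma ball_R2 (a e b : R) : ball a e b -> a - e < b < a + e.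
Proof. intros H. assert (H0 : Rabs (b - a) < e) by exact H. apply Rabs_def2 in H0. lra. Qed.

Lemma R_ball2 (a e b : R) : a - e < b < a + e -> ball a e b.
Proof. intros H. change (Rabs (b - a) < e). apply Rabs_def1; lra. Qed.

Lemma loc_dom {P : UniformSpace} (g : P -> R) (p : P) (a b : R) :
  continuous g p -> a < g p < b -> locally p (fun r => a < g r < b).
Proof.
  intros Hc Hab.
  assert (He : 0 < Rmin (g p - a) (b - g p)).
  { apply Rmin_pos; lra. }
  pose proof (proj1 (filterlim_locally g (g p)) Hc (mkposreal _ He)) as H.
  eapply filter_imp; [|exact H]. intros r Hr. simpl in Hr.
  apply ball_R2 in Hr. simpl in Hr.
  pose proof (Rmin_l (g p - a) (b - g p)). pose proof (Rmin_r (g p - a) (b - g p)). lra.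
Qed.

Lemma tube {P : UniformSpace} (h : P -> R -> R) (p : P) :
  (forall s, continuous (fun r : P * R => h (fst r) (snd r)) (p, s)) ->
  forall eps : posreal, exists d : posreal, forall q, ball p d q ->
    forall s, 0 <= s <= 1 -> Rabs (h q s - h p s) < eps.
Proof.
  intros Hc eps.
  assert (Hd : forall s, {d : posreal | forall q s', ball p d q -> ball s d s' ->
                 Rabs (h q s' - h p s) < eps / 2}).
  { intros s. apply constructive_indefinite_description.
    pose proof (proj1 (filterlim_locally _ _) (Hc s) (pos_div_2 eps)) as H.
    destruct H as [d Hd]. exists d. intros q s' Hq Hs'.
    apply (Hd (q, s')). split; assumption. }
  set (delta := fun s => proj1_sig (Hd s)).
  destruct (compactness_value_1d 0 1 delta) as [d Hcd].
  exists d. intros q Hq s Hs.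
  pose proof (Hcd s Hs) as Hnn. apply NNPP in Hnn. destruct Hnn as [t [Ht [Hst Hdt]]].
  assert (B1 : ball p (delta t) q) by (apply ball_le with d; auto).
  assert (B2 : ball t (delta t) s) by exact Hst.
  pose proof (proj2_sig (Hd t) q s B1 B2) as E1.
  pose proof (proj2_sig (Hd t) p s (ball_center p _) B2) as E2.
  apply Rabs_def2 in E1. apply Rabs_def2 in E2. apply Rabs_def1; lra.
Qed.

Lemma cont_slice {P : UniformSpace} (h : P -> R -> R) (q : P) (s : R) :
  continuous (fun r : P * R => h (fst r) (snd r)) (q, s) ->
  continuous (fun s' => h q s') s.
Proof.
  intros H.
  apply (continuous_comp_2 (fun _ : R => q) (fun s' => s') h); auto.
  apply continuous_const. apply continuous_id.
Qed.

Lemma exR_cont (f : R -> R) (a b : R) :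
  (forall z, Rmin a b <= z <= Rmax a b -> continuous f z) -> ex_RInt f a b.
Proof. intros H. apply (@ex_RInt_continuous R_CompleteNormedModule). exact H. Qed.

Lemma RInt_param_cont {P : UniformSpace} (h : P -> R -> R) (p : P) :
  locally p (fun q => forall s, continuous (fun r : P * R => h (fst r) (snd r)) (q, s)) ->
  continuous (fun q => RInt (h q) 0 1) p.
Proof.
  intros Hloc.
  assert (Hp : forall s, continuous (fun r : P * R => h (fst r) (snd r)) (p, s)).
  { apply (locally_singleton _ _ Hloc). }
  apply filterlim_locally. intros eps.
  destruct (tube h p Hp (pos_div_2 eps)) as [d Hd].
  assert (Hb : locally p (fun q => ball p d q)) by (exists d; auto).
  eapply filter_imp; [| exact (filter_and _ _ Hloc Hb)].
  intros q [Hq Hbq].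
  assert (Eq : ex_RInt (h q) 0 1).
  { apply exR_cont. intros z _. apply cont_slice; auto. }
  assert (Ep : ex_RInt (h p) 0 1).
  { apply exR_cont. intros z _. apply cont_slice; auto. }
  change (Rabs (RInt (h q) 0 1 - RInt (h p) 0 1) < eps).
  assert (Hm : RInt (fun s => h q s - h p s) 0 1 = RInt (h q) 0 1 - RInt (h p) 0 1).
  { apply (RInt_minus (h q) (h p) 0 1 Eq Ep). }
  rewrite <- Hm.
  assert (Hle : norm (RInt (fun s => h q s - h p s) 0 1) <= (1 - 0) * (eps / 2)).
  { apply norm_RInt_le_const with (f := fun s => h q s - h p s). lra.
    intros x Hx. apply Rlt_le. apply (Hd q Hbq x Hx).
    apply (@RInt_correct R_CompleteNormedModule). apply (ex_RInt_minus (h q) (h p) 0 1 Eq Ep). }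
  change (norm (RInt (fun s => h q s - h p s) 0 1)) with (Rabs (RInt (fun s => h q s - h p s) 0 1)) in Hle.
  destruct eps; simpl in *; lra.
Qed.

Lemma RInt_param_deriv (f df : R -> R -> R) (x : R) :
  locally x (fun u => forall s, is_derive (fun u' => f u' s) u (df u s)) ->
  (forall s, continuous (fun r : R * R => df (fst r) (snd r)) (x, s)) ->
  locally x (fun u => forall s, continuous (f u) s) ->
  is_derive (fun u => RInt (f u) 0 1) x (RInt (df x) 0 1).
Proof.
  intros H1 H2 H3.
  assert (E : RInt (df x) 0 1 = RInt (fun t => Derive (fun u => f u t) x) 0 1).
  { apply RInt_ext. intros t _. symmetry. apply is_derive_unique.
    apply (locally_singleton _ _ H1). }
  rewrite E.
  apply (is_derive_RInt_param f 0 1 x).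
  - eapply filter_imp; [| exact H1]. intros u Hu t _. eexists. apply Hu.
  - intros t _. apply continuity_2d_pt_ext_loc with (f := df).
    + destruct H1 as [d Hd]. exists d. intros u v Hu Hv. symmetry.
      apply is_derive_unique. apply Hd. exact Hu.
    + apply continuity_2d_pt_filterlim. apply H2.
  - eapply filter_imp; [| exact H3]. intros u Hu. apply exR_cont. intros; apply Hu.
Qed.

Definition ap (F : field) (p : R * R * R * R) : R :=
  F (fst (fst (fst p))) (snd (fst (fst p))) (snd (fst p)) (snd p).

Definition Good (t0 t1 : R) (F : field) : Prop :=
  forall t x y z, t0 < t < t1 -> continuous (fun q : R * R * R * R => ap F q) (t, x, y, z).

Definition I1 (F : field) (q : R * R * R) : R :=
  RInt (fun z => F (fst (fst q)) (snd (fst q)) (snd q) z) 0 1.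
Definition I2 (F : field) (q : R * R) : R := RInt (fun y => I1 F (q, y)) 0 1.

Lemma int3_I2 (F : field) t : int3 (F t) = RInt (fun x => I2 F (t, x)) 0 1.
Proof. reflexivity. Qed.

Lemma loc_t3 t0 t1 (q : R * R * R) : t0 < fst (fst q) < t1 ->
  locally q (fun r : R * R * R => t0 < fst (fst r) < t1).
Proof.
  intros H. apply (loc_dom (fun r : R * R * R => fst (fst r))); auto.
  apply (continuous_comp (fun r : R * R * R => fst r) (fun r : R * R => fst r)).
  apply cont_fst. apply cont_fst.
Qed.

Lemma loc_t2 t0 t1 (q : R * R) : t0 < fst q < t1 ->
  locally q (fun r : R * R => t0 < fst r < t1).
Proof. intros H. apply (loc_dom (fun r : R * R => fst r)); auto. apply cont_fst. Qed.

Lemma loc_t1 t0 t1 (t : R) : t0 < t < t1 -> locally t (fun r : R => t0 < r < t1).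
Proof. intros H. apply (loc_dom (fun r : R => r)); auto. apply continuous_id. Qed.

Lemma I1_cont t0 t1 F q : Good t0 t1 F -> t0 < fst (fst q) < t1 -> continuous (I1 F) q.
Proof.
  intros HG Hq.
  apply (RInt_param_cont (fun q z => F (fst (fst q)) (snd (fst q)) (snd q) z)).
  eapply filter_imp; [| exact (loc_t3 t0 t1 q Hq)].
  intros [[t x] y] Hr s. simpl in Hr. exact (HG t x y s Hr).
Qed.

Lemma I2_cont t0 t1 F q : Good t0 t1 F -> t0 < fst q < t1 -> continuous (I2 F) q.
Proof.
  intros HG Hq.
  apply (RInt_param_cont (fun q y => I1 F (q, y))).
  eapply filter_imp; [| exact (loc_t2 t0 t1 q Hq)].
  intros [t x] Hr s. simpl in Hr.
  apply continuous_ext with (f := I1 F).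
  - intros [a b]; reflexivity.
  - apply (I1_cont t0 t1); auto.
Qed.

Ltac cont_tuple :=
  repeat first [ apply cont_pair | apply continuous_const | apply continuous_id
               | apply cont_fst | apply cont_snd
               | apply (continuous_comp (fun r => fst r) (fun r => fst r)); [apply cont_fst|apply cont_fst]
               | apply (continuous_comp (fun r => fst r) (fun r => snd r)); [apply cont_fst|apply cont_snd]
               | apply (continuous_comp (fun r => fst r) (fun r => fst (fst r))); [apply cont_fst|]
               ].

Lemma int3_deriv t0 t1 (G H : field) t :
  t0 < t < t1 -> Good t0 t1 G -> Good t0 t1 H ->
  (forall t x y z, t0 < t < t1 -> is_derive (fun s => G s x y z) t (H t x y z)) ->
  is_derive (fun s => int3 (G s)) t (int3 (H t)).
Proof.
  intros Ht HG HH HD.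
  assert (D1 : forall t x y, t0 < t < t1 ->
            is_derive (fun u => I1 G (u, x, y)) t (I1 H (t, x, y))).
  { intros t' x y Ht'. unfold I1; simpl.
    apply (RInt_param_deriv (fun u z => G u x y z) (fun u z => H u x y z)).
    - eapply filter_imp; [| exact (loc_t1 t0 t1 t' Ht')]. intros u Hu s. apply HD; auto.
    - intros s. apply (continuous_comp (fun r : R * R => (fst r, x, y, snd r)) (ap H)).
      + cont_tuple.
      + simpl. apply HH; auto.
    - eapply filter_imp; [| exact (loc_t1 t0 t1 t' Ht')]. intros u Hu s.
      apply (continuous_comp (fun r : R => (u, x, y, r)) (ap G)).
      + cont_tuple.
      + apply HG; auto. }
  assert (D2 : forall t x, t0 < t < t1 ->
            is_derive (fun u => I2 G (u, x)) t (I2 H (t, x))).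
  { intros t' x Ht'. unfold I2.
    apply (RInt_param_deriv (fun u y => I1 G (u, x, y)) (fun u y => I1 H (u, x, y))).
    - eapply filter_imp; [| exact (loc_t1 t0 t1 t' Ht')]. intros u Hu s. apply D1; auto.
    - intros s. apply (continuous_comp (fun r : R * R => (fst r, x, snd r)) (I1 H)).
      + cont_tuple.
      + apply (I1_cont t0 t1); auto.
    - eapply filter_imp; [| exact (loc_t1 t0 t1 t' Ht')]. intros u Hu s.
      apply (continuous_comp (fun r : R => (u, x, r)) (I1 G)).
      + cont_tuple.
      + apply (I1_cont t0 t1); auto. }
  rewrite int3_I2.
  apply (is_derive_ext (fun u => RInt (fun x => I2 G (u, x)) 0 1)).
  { intros u. reflexivity. }
  apply (RInt_param_deriv (fun u x => I2 G (u, x)) (fun u x => I2 H (u, x))).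
  - eapply filter_imp; [| exact (loc_t1 t0 t1 t Ht)]. intros u Hu s. apply D2; auto.
  - intros s. apply continuous_ext with (f := I2 H).
    + intros [a b]; reflexivity.
    + apply (I2_cont t0 t1); auto.
  - eapply filter_imp; [| exact (loc_t1 t0 t1 t Ht)]. intros u Hu s.
    apply (continuous_comp (fun r : R => (u, r)) (I2 G)).
    + cont_tuple.
    + apply (I2_cont t0 t1); auto.
Qed.


Lemma int3_ext (f g : R -> R -> R -> R) :
  (forall x y z, f x y z = g x y z) -> int3 f = int3 g.
Proof.
  intros H. unfold int3. apply RInt_ext; intros x _. apply RInt_ext; intros y _.
  apply RInt_ext; intros z _. apply H.
Qed.

Lemma int3_ex t0 t1 F t : Good t0 t1 F -> t0 < t < t1 ->
  (forall x y, ex_RInt (fun z => F t x y z) 0 1) /\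
  (forall x, ex_RInt (fun y => I1 F (t, x, y)) 0 1) /\
  ex_RInt (fun x => I2 F (t, x)) 0 1.
Proof.
  intros HG Ht. split; [|split].
  - intros x y. apply exR_cont. intros z _.
    apply (continuous_comp (fun r : R => (t, x, y, r)) (ap F)). cont_tuple. apply HG; auto.
  - intros x. apply exR_cont. intros z _.
    apply (continuous_comp (fun r : R => (t, x, r)) (I1 F)). cont_tuple.
    apply (I1_cont t0 t1); auto.
  - apply exR_cont. intros z _.
    apply (continuous_comp (fun r : R => (t, r)) (I2 F)). cont_tuple.
    apply (I2_cont t0 t1); auto.
Qed.

Lemma RInt_lin (f g : R -> R) (a b : R) :
  ex_RInt f 0 1 -> ex_RInt g 0 1 ->
  RInt (fun x => a * f x + b * g x) 0 1 = a * RInt f 0 1 + b * RInt g 0 1.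
Proof.
  intros Hf Hg.
  apply is_RInt_unique.
  pose proof (@RInt_correct R_CompleteNormedModule f 0 1 Hf) as If.
  pose proof (@RInt_correct R_CompleteNormedModule g 0 1 Hg) as Ig.
  pose proof (@is_RInt_scal R_NormedModule f 0 1 a _ If) as Ia.
  pose proof (@is_RInt_scal R_NormedModule g 0 1 b _ Ig) as Ib.
  pose proof (@is_RInt_plus R_NormedModule _ _ 0 1 _ _ Ia Ib) as E.
  exact E.
Qed.

Lemma RInt_le01 (f g : R -> R) : ex_RInt f 0 1 -> ex_RInt g 0 1 ->
  (forall x, f x <= g x) -> RInt f 0 1 <= RInt g 0 1.
Proof. intros Hf Hg H. apply RInt_le; auto. lra. Qed.

Lemma int3_le t0 t1 F G t : Good t0 t1 F -> Good t0 t1 G -> t0 < t < t1 ->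
  (forall x y z, F t x y z <= G t x y z) -> int3 (F t) <= int3 (G t).
Proof.
  intros HF HG Ht H.
  destruct (int3_ex t0 t1 F t HF Ht) as [F1 [F2 F3]].
  destruct (int3_ex t0 t1 G t HG Ht) as [G1 [G2 G3]].
  rewrite !int3_I2. apply RInt_le01; auto. intros x.
  unfold I2. apply RInt_le01; auto. intros y. unfold I1; simpl.
  apply RInt_le01; auto.
Qed.


Lemma int3_lin t0 t1 F G t a b : Good t0 t1 F -> Good t0 t1 G -> t0 < t < t1 ->
  int3 (fun x y z => a * F t x y z + b * G t x y z) = a * int3 (F t) + b * int3 (G t).
Proof.
  intros HF HG Ht.
  destruct (int3_ex t0 t1 F t HF Ht) as [F1 [F2 F3]].
  destruct (int3_ex t0 t1 G t HG Ht) as [G1 [G2 G3]].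
  rewrite !int3_I2.
  transitivity (RInt (fun x => a * I2 F (t,x) + b * I2 G (t,x)) 0 1).
  - unfold int3. apply RInt_ext; intros x _. unfold I2.
    transitivity (RInt (fun y => a * I1 F (t,x,y) + b * I1 G (t,x,y)) 0 1).
    + apply RInt_ext; intros y _. unfold I1; simpl. apply RInt_lin; auto.
    + apply RInt_lin; auto.
  - apply RInt_lin; auto.
Qed.

Lemma int3_const c : int3 (fun _ _ _ => c) = c.
Proof.
  assert (H : forall d : R, RInt (fun _ : R => d) 0 1 = d).
  { intros d. rewrite RInt_const. unfold scal; simpl. unfold mult; simpl. ring. }
  unfold int3.
  transitivity (RInt (fun _ : R => RInt (fun _ : R => c) 0 1) 0 1).
  - apply RInt_ext; intros x _. apply RInt_ext; intros y _. apply H.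
  - rewrite !H. reflexivity.
Qed.


Lemma Good_plus t0 t1 F G : Good t0 t1 F -> Good t0 t1 G ->
  Good t0 t1 (fun t x y z => F t x y z + G t x y z).
Proof.
  intros HF HG t x y z Ht.
  apply continuous_ext with (f := fun q => plus (ap F q) (ap G q)).
  - intros q; reflexivity.
  - apply (@continuous_plus _ _ R_NormedModule (fun q => ap F q) (fun q => ap G q)); auto.
Qed.

Lemma Good_mult t0 t1 F G : Good t0 t1 F -> Good t0 t1 G ->
  Good t0 t1 (fun t x y z => F t x y z * G t x y z).
Proof.
  intros HF HG t x y z Ht.
  apply continuous_ext with (f := fun q => mult (ap F q) (ap G q)).
  - intros q; reflexivity.
  - apply (@continuous_mult _ R_AbsRing); auto.
Qed.

Lemma Good_const t0 t1 c : Good t0 t1 (fun _ _ _ _ => c).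
Proof. intros t x y z Ht. apply continuous_const. Qed.

Lemma Good_opp t0 t1 F : Good t0 t1 F -> Good t0 t1 (fun t x y z => - F t x y z).
Proof.
  intros HF t x y z Ht.
  apply continuous_ext with (f := fun q => mult (-1) (ap F q)).
  - intros q. change (-1 * ap F q = - ap F q). ring.
  - apply (@continuous_mult _ R_AbsRing); auto. apply continuous_const.
Qed.

Lemma Good_minus t0 t1 F G : Good t0 t1 F -> Good t0 t1 G ->
  Good t0 t1 (fun t x y z => F t x y z - G t x y z).
Proof.
  intros HF HG. apply (Good_plus t0 t1 F (fun t x y z => - G t x y z)); auto.
  apply Good_opp; auto.
Qed.

Lemma Good_pow2 t0 t1 F : Good t0 t1 F -> Good t0 t1 (fun t x y z => F t x y z ^ 2).
Proof.
  intros HF t x y z Ht.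
  apply continuous_ext with (f := fun q => mult (ap F q) (ap F q)).
  - intros q. change (ap F q * ap F q = ap F q ^ 2). ring.
  - apply (@continuous_mult _ R_AbsRing); auto.
Qed.

Lemma Good_inv t0 t1 F : Good t0 t1 F ->
  (forall t x y z, t0 < t < t1 -> F t x y z <> 0) ->
  Good t0 t1 (fun t x y z => / F t x y z).
Proof.
  intros HF Hn t x y z Ht.
  apply (continuous_comp (fun q => ap F q) Rinv).
  - apply HF; auto.
  - apply continuous_Rinv. apply Hn; auto.
Qed.

Lemma Good_div t0 t1 F G : Good t0 t1 F -> Good t0 t1 G ->
  (forall t x y z, t0 < t < t1 -> G t x y z <> 0) ->
  Good t0 t1 (fun t x y z => F t x y z / G t x y z).
Proof.
  intros HF HG Hn. apply (Good_mult t0 t1 F (fun t x y z => / G t x y z)); auto.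
  apply Good_inv; auto.
Qed.

Lemma Good_freeze t0 t1 F s : Good t0 t1 F -> t0 < s < t1 ->
  Good t0 t1 (fun _ x y z => F s x y z).
Proof.
  intros HF Hs t x y z Ht.
  apply (continuous_comp (fun q : R * R * R * R => (s, snd (fst (fst q)), snd (fst q), snd q)) (ap F)).
  - repeat apply cont_pair.
    + apply continuous_const.
    + apply (continuous_comp (fun r : R*R*R*R => fst r) (fun r => snd (fst r))).
      apply cont_fst. apply (continuous_comp (fun r : R*R*R => fst r) (fun r => snd r)).
      apply cont_fst. apply cont_snd.
    + apply (continuous_comp (fun r : R*R*R*R => fst r) (fun r => snd r)).
      apply cont_fst. apply cont_snd.
    + apply cont_snd.
  - simpl. apply HF; auto.
Qed.

Lemma Good_sum3 t0 t1 (G : nat -> field) : (forall i, (i < 3)%nat -> Good t0 t1 (G i)) ->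
  Good t0 t1 (fun t x y z => sum3 (fun i => G i t x y z)).
Proof.
  intros H. unfold sum3.
  apply Good_plus; [apply Good_plus|]; apply H; lia.
Qed.


Lemma smooth_Good t0 t1 F ds : smooth_on t0 t1 F ->
  (forall d, In d ds -> (d < 4)%nat) -> Good t0 t1 (iterd ds F).
Proof. intros H Hds t x y z Ht. apply (H ds Hds t x y z Ht). Qed.

Lemma smooth_iterd t0 t1 F ds : smooth_on t0 t1 F ->
  (forall d, In d ds -> (d < 4)%nat) -> smooth_on t0 t1 (iterd ds F).
Proof.
  intros H Hds ds' Hds' t x y z Ht.
  unfold iterd. rewrite <- fold_right_app. apply (H (ds' ++ ds)).
  - intros d Hd. apply in_app_or in Hd. destruct Hd; auto.
  - auto.
Qed.

Lemma smooth_pd t0 t1 F k : smooth_on t0 t1 F -> (k < 4)%nat -> smooth_on t0 t1 (pd k F).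
Proof.
  intros H Hk. apply (smooth_iterd t0 t1 F (k :: nil) H).
  intros d [Hd|[]]; subst; auto.
Qed.

Lemma smooth_Good0 t0 t1 F : smooth_on t0 t1 F -> Good t0 t1 F.
Proof. intros H. apply (smooth_Good t0 t1 F nil H). intros d []. Qed.

Lemma smooth_ex t0 t1 F k t x y z : smooth_on t0 t1 F -> (k < 4)%nat -> t0 < t < t1 ->
  ex_pd k F t x y z.
Proof. intros H Hk Ht. apply (H nil (fun d (Hd : In d nil) => match Hd with end) t x y z Ht); auto. Qed.

Definition get (k : nat) (p : R * R * R * R) : R :=
  match k with
  | 0 => fst (fst (fst p)) | 1 => snd (fst (fst p)) | 2 => snd (fst p) | _ => snd p
  end.

Definition upd (k : nat) (s : R) (p : R * R * R * R) : R * R * R * R :=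
  match k with
  | 0 => (s, snd (fst (fst p)), snd (fst p), snd p)
  | 1 => (fst (fst (fst p)), s, snd (fst p), snd p)
  | 2 => (fst (fst (fst p)), snd (fst (fst p)), s, snd p)
  | _ => (fst (fst (fst p)), snd (fst (fst p)), snd (fst p), s)
  end.

Definition expd (F : field) (k : nat) (q : R * R * R * R) : Prop :=
  ex_pd k F (fst (fst (fst q))) (snd (fst (fst q))) (snd (fst q)) (snd q).

Lemma pd_ap F k p : ap (pd k F) p = Derive (fun s => ap F (upd k s p)) (get k p).
Proof. destruct p as [[[t x] y] z]; destruct k as [|[|[|k]]]; reflexivity. Qed.

Lemma expd_ap F k p : expd F k p <-> ex_derive (fun s => ap F (upd k s p)) (get k p).
Proof. destruct p as [[[t x] y] z]; destruct k as [|[|[|k]]]; reflexivity. Qed.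

Lemma upd_upd_same k s s' p : upd k s (upd k s' p) = upd k s p.
Proof. destruct p as [[[t x] y] z]; destruct k as [|[|[|k]]]; reflexivity. Qed.

Lemma get_upd_same k s p : get k (upd k s p) = s.
Proof. destruct p as [[[t x] y] z]; destruct k as [|[|[|k]]]; reflexivity. Qed.

Lemma upd_get k p : upd k (get k p) p = p.
Proof. destruct p as [[[t x] y] z]; destruct k as [|[|[|k]]]; reflexivity. Qed.

Lemma get_upd_other a b s p : (a < 4)%nat -> (b < 4)%nat -> a <> b -> get a (upd b s p) = get a p.
Proof.
  intros Ha Hb Hab. destruct p as [[[t x] y] z].
  destruct a as [|[|[|[|a]]]]; destruct b as [|[|[|[|b]]]]; try lia; reflexivity.
Qed.

Lemma upd_comm a b s s' p : (a < 4)%nat -> (b < 4)%nat -> a <> b ->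
  upd a s (upd b s' p) = upd b s' (upd a s p).
Proof.
  intros Ha Hb Hab. destruct p as [[[t x] y] z].
  destruct a as [|[|[|[|a]]]]; destruct b as [|[|[|[|b]]]]; try lia; reflexivity.
Qed.

Lemma get0_updS i s p : get 0 (upd (S i) s p) = get 0 p.
Proof. destruct p as [[[t x] y] z]; destruct i as [|[|i]]; reflexivity. Qed.

Lemma cont_fst_comp {A B C : UniformSpace} (g : A -> B * C) x :
  continuous g x -> continuous (fun r => fst (g r)) x.
Proof. intros H. apply (continuous_comp g fst); auto. apply cont_fst. Qed.
Lemma cont_snd_comp {A B C : UniformSpace} (g : A -> B * C) x :
  continuous g x -> continuous (fun r => snd (g r)) x.
Proof. intros H. apply (continuous_comp g snd); auto. apply cont_snd. Qed.

Ltac ctup := repeat first [ apply continuous_const | apply continuous_id | apply cont_pair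
                          | apply cont_fst_comp | apply cont_snd_comp ].

Lemma cont_upd k (r0 : R * (R * R * R * R)) :
  continuous (fun r : R * (R * R * R * R) => upd k (fst r) (snd r)) r0.
Proof. destruct k as [|[|[|k]]]; simpl; ctup. Qed.

Lemma cont_upd2 a b p (r0 : R * R) :
  continuous (fun r : R * R => upd a (fst r) (upd b (snd r) p)) r0.
Proof.
  apply (continuous_comp (fun r : R * R => (fst r, upd b (snd r) p))
           (fun r : R * (R * R * R * R) => upd a (fst r) (snd r))).
  - apply cont_pair. ctup.
    apply (continuous_comp (fun r : R * R => (snd r, p))
           (fun r : R * (R * R * R * R) => upd b (fst r) (snd r))). ctup. apply cont_upd.
  - apply cont_upd.
Qed.

Lemma cont_upd1 k p (s0 : R) : continuous (fun s : R => upd k s p) s0.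
Proof.
  apply (continuous_comp (fun s : R => (s, p))
           (fun r : R * (R * R * R * R) => upd k (fst r) (snd r))). ctup. apply cont_upd.
Qed.

Lemma L1 F a b p u v : (a < 4)%nat -> (b < 4)%nat -> a <> b ->
  Derive (fun t => ap F (upd a u (upd b t p))) v = ap (pd b F) (upd a u (upd b v p)).
Proof.
  intros Ha Hb Hab. rewrite pd_ap.
  rewrite get_upd_other by auto. rewrite get_upd_same.
  apply Derive_ext. intros t. f_equal.
  rewrite (upd_comm a b u v p) by auto. rewrite upd_upd_same. symmetry. apply upd_comm; auto.
Qed.

Lemma L1ex F a b p u v : (a < 4)%nat -> (b < 4)%nat -> a <> b ->
  expd F b (upd a u (upd b v p)) -> ex_derive (fun t => ap F (upd a u (upd b t p))) v.
Proof.
  intros Ha Hb Hab H. apply expd_ap in H.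
  rewrite get_upd_other in H by auto. rewrite get_upd_same in H.
  eapply ex_derive_ext; [| exact H]. intros t. simpl. f_equal.
  rewrite (upd_comm a b u v p) by auto. rewrite upd_upd_same. apply upd_comm; auto.
Qed.

Lemma L2 F a b p u v :
  Derive (fun t => ap F (upd a t (upd b v p))) u = ap (pd a F) (upd a u (upd b v p)).
Proof.
  rewrite pd_ap. rewrite get_upd_same. apply Derive_ext. intros t. rewrite upd_upd_same. reflexivity.
Qed.

Lemma L2ex F a b p u v :
  expd F a (upd a u (upd b v p)) -> ex_derive (fun t => ap F (upd a t (upd b v p))) u.
Proof.
  intros H. apply expd_ap in H. rewrite get_upd_same in H.
  eapply ex_derive_ext; [| exact H]. intros t. simpl. rewrite upd_upd_same. reflexivity.
Qed.

Lemma smooth_expd t0 t1 F k q : smooth_on t0 t1 F -> (k < 4)%nat -> t0 < get 0 q < t1 ->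
  expd F k q.
Proof. intros H Hk Hq. destruct q as [[[t x] y] z]. apply (smooth_ex t0 t1); auto. Qed.

Lemma comp_cont_upd2 G a b p : continuous (ap G) p ->
  continuous (fun z : R * R => ap G (upd a (fst z) (upd b (snd z) p))) (get a p, get b p).
Proof.
  intros Hc. apply (continuous_comp (fun r : R * R => upd a (fst r) (upd b (snd r) p)) (ap G)).
  apply cont_upd2. cbv beta. cbn [fst snd]. rewrite upd_get. rewrite upd_get. exact Hc.
Qed.

Lemma schwarz_ap t0 t1 F a b p : smooth_on t0 t1 F -> (a < 4)%nat -> (b < 4)%nat -> a <> b ->
  t0 < get 0 p < t1 -> ap (pd a (pd b F)) p = ap (pd b (pd a F)) p.
Proof.
  intros HF Ha Hb Hab Hp.
  set (f := fun u v => ap F (upd a u (upd b v p))).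
  assert (E1 : forall u v, Derive (fun z => Derive (fun t => f z t) v) u
                           = ap (pd a (pd b F)) (upd a u (upd b v p))).
  { intros u v. unfold f. rewrite <- L2. apply Derive_ext. intros z. apply L1; auto. }
  assert (E2 : forall u v, Derive (fun z => Derive (fun t => f t z) u) v
                           = ap (pd b (pd a F)) (upd a u (upd b v p))).
  { intros u v. unfold f. rewrite <- L1 by auto. apply Derive_ext. intros z. apply L2. }
  assert (Pp : upd a (get a p) (upd b (get b p) p) = p).
  { rewrite upd_get. apply upd_get. }
  assert (CC1 : continuous (ap (pd a (pd b F))) p).
  { destruct p as [[[t x] y] z].
    apply (smooth_Good t0 t1 F (a :: b :: nil)); auto.
    intros d [Hd|[Hd|[]]]; subst; auto. }
  assert (CC2 : continuous (ap (pd b (pd a F))) p).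
  { destruct p as [[[t x] y] z].
    apply (smooth_Good t0 t1 F (b :: a :: nil)); auto.
    intros d [Hd|[Hd|[]]]; subst; auto. }
  pose proof (Schwarz f (get a p) (get b p)) as HS.
  rewrite E1, E2, Pp in HS. apply HS.
  - apply locally_2d_locally.
    assert (Hl : locally (get a p, get b p)
              (fun r : R * R => t0 < get 0 (upd a (fst r) (upd b (snd r) p)) < t1)).
    { apply (loc_dom (fun r : R * R => get 0 (upd a (fst r) (upd b (snd r) p)))).
      - apply (continuous_comp (fun r : R * R => upd a (fst r) (upd b (snd r) p)) (get 0)).
        apply cont_upd2. simpl. ctup.
      - simpl. rewrite Pp. auto. }
    eapply filter_imp; [| exact Hl]. intros [u v] Huv. simpl in Huv |- *.
    assert (S1 : forall G k, smooth_on t0 t1 G -> (k < 4)%nat -> expd G k (upd a u (upd b v p))).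
    { intros G k HG Hk. apply (smooth_expd t0 t1); auto. }
    split; [|split; [|split]].
    + apply (L2ex F a b p u v). apply S1; auto.
    + apply (L1ex F a b p u v); auto.
    + eapply ex_derive_ext. { intros z. symmetry. apply (L1 F a b p z v); auto. }
      apply (L2ex (pd b F) a b p u v). apply S1; [apply smooth_pd|]; auto.
    + eapply ex_derive_ext. { intros z. symmetry. apply (L2 F a b p u z). }
      apply (L1ex (pd a F) a b p u v); auto. apply S1; [apply smooth_pd|]; auto.
  - apply continuity_2d_pt_ext with (f := fun u v => ap (pd a (pd b F)) (upd a u (upd b v p))).
    { intros; symmetry; apply E1. }
    apply continuity_2d_pt_filterlim.
    exact (comp_cont_upd2 (pd a (pd b F)) a b p CC1).
  - apply continuity_2d_pt_ext with (f := fun u v => ap (pd b (pd a F)) (upd a u (upd b v p))).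
    { intros; symmetry; apply E2. }
    apply continuity_2d_pt_filterlim.
    exact (comp_cont_upd2 (pd b (pd a F)) a b p CC2).
Qed.

Definition EfunP (ta A c1 c2 : R) (vv : nat -> R) (dv : nat -> nat -> R) (dl : nat -> R)
  (q : R) (i : nat) : R :=
  let w := sum3 (fun j => vv j ^ 2) in
  - A * vv i
  - c1 * ta * (1 - w) * dl i
  - ta * sum3 (fun j => vv j * dv j i)
  + ta * (1 - q) * vv i * sum3 (fun j => dv j j)
  + ta * c2 * (1 - q) * vv i * sum3 (fun j => vv j * dl j)
  + A * q * w * vv i.

Definition EfunP' (ta A c1 c2 : R) (vv : nat -> R) (dv : nat -> nat -> R) (dl : nat -> R)
   (vv' : nat -> R) (dv' : nat -> nat -> R) (dl' : nat -> R) (q q' : R) (i : nat) : R :=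
  let w := sum3 (fun j => vv j ^ 2) in
  let w' := sum3 (fun j => 2 * vv j * vv' j) in
  let D := sum3 (fun j => dv j j) in
  let D' := sum3 (fun j => dv' j j) in
  let S := sum3 (fun j => vv j * dl j) in
  let S' := sum3 (fun j => vv' j * dl j + vv j * dl' j) in
  - A * vv' i
  - c1 * ta * ((- w') * dl i + (1 - w) * dl' i)
  - ta * sum3 (fun j => vv' j * dv j i + vv j * dv' j i)
  + ta * ((- q') * vv i * D + (1 - q) * vv' i * D + (1 - q) * vv i * D')
  + ta * c2 * ((- q') * vv i * S + (1 - q) * vv' i * S + (1 - q) * vv i * S')
  + A * (q' * w * vv i + q * w' * vv i + q * w * vv' i).

Definition Efun (al K t : R) (vv : nat -> R) (dv : nat -> nat -> R) (dl : nat -> R) (i : nat) : R :=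
  EfunP (Rpower t (- al)) (al * (1 - 3 * K) / t) (K / (1 + K)) ((1 - K) / (1 + K)) vv dv dl
    ((1 - K) / (1 - K * sum3 (fun j => vv j ^ 2))) i.

Definition Efun' (al K t : R) (vv : nat -> R) (dv : nat -> nat -> R) (dl : nat -> R)
   (vv' : nat -> R) (dv' : nat -> nat -> R) (dl' : nat -> R) (i : nat) : R :=
  EfunP' (Rpower t (- al)) (al * (1 - 3 * K) / t) (K / (1 + K)) ((1 - K) / (1 + K)) vv dv dl
    vv' dv' dl' ((1 - K) / (1 - K * sum3 (fun j => vv j ^ 2)))
    ((1 - K) * K * sum3 (fun j => 2 * vv j * vv' j) / ((1 - K * sum3 (fun j => vv j ^ 2)) ^ 2)) i.

Lemma EfunP_deriv ta A c1 c2 (V : nat -> R -> R) (DV : nat -> nat -> R -> R) (DL : nat -> R -> R)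
  (Qf : R -> R) (V' : nat -> R) (DV' : nat -> nat -> R) (DL' : nat -> R) Q' s0 i :
  (i < 3)%nat ->
  (forall k, (k < 3)%nat -> is_derive (V k) s0 (V' k)) ->
  (forall k m, (k < 3)%nat -> (m < 3)%nat -> is_derive (DV k m) s0 (DV' k m)) ->
  (forall k, (k < 3)%nat -> is_derive (DL k) s0 (DL' k)) ->
  is_derive Qf s0 Q' ->
  is_derive (fun s => EfunP ta A c1 c2 (fun k => V k s) (fun k m => DV k m s) (fun k => DL k s) (Qf s) i) s0
    (EfunP' ta A c1 c2 (fun k => V k s0) (fun k m => DV k m s0) (fun k => DL k s0) V' DV' DL' (Qf s0) Q' i).
Proof.
  intros Hi HV HDV HDL HQ.
  assert (EV : forall k, (k < 3)%nat -> Derive (fun x => V k x) s0 = V' k).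
  { intros k Hk. apply is_derive_unique. apply HV; auto. }
  assert (EDV : forall k m, (k < 3)%nat -> (m < 3)%nat -> Derive (fun x => DV k m x) s0 = DV' k m).
  { intros k m Hk Hm. apply is_derive_unique. apply HDV; auto. }
  assert (EDL : forall k, (k < 3)%nat -> Derive (fun x => DL k x) s0 = DL' k).
  { intros k Hk. apply is_derive_unique. apply HDL; auto. }
  assert (EQ : Derive (fun x => Qf x) s0 = Q').
  { apply is_derive_unique. apply HQ. }
  assert (XV : forall k, (k < 3)%nat -> ex_derive (fun x => V k x) s0) by (intros k Hk; eexists; apply HV; auto).
  assert (XDV : forall k m, (k < 3)%nat -> (m < 3)%nat -> ex_derive (fun x => DV k m x) s0) by (intros k m Hk Hm; eexists; apply HDV; auto).
  assert (XDL : forall k, (k < 3)%nat -> ex_derive (fun x => DL k x) s0) by (intros k Hk; eexists; apply HDL; auto).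
  assert (XQ : ex_derive (fun x => Qf x) s0) by (eexists; apply HQ).
  unfold EfunP, EfunP', sum3 in *.
  auto_derive.
  - repeat match goal with
      | |- _ /\ _ => apply conj
      | |- True => exact I
      | |- ex_derive (fun x => V _ x) _ => apply XV; lia
      | |- ex_derive (fun x => DV _ _ x) _ => apply XDV; lia
      | |- ex_derive (fun x => DL _ x) _ => apply XDL; lia
      | |- ex_derive (fun x => Qf x) _ => apply XQ
      end.
  - rewrite !EV, !EDV, !EDL, !EQ by lia. ring.
Qed.

Lemma Q_deriv K (V : nat -> R -> R) (V' : nat -> R) s0 :
  (forall k, (k < 3)%nat -> is_derive (V k) s0 (V' k)) ->
  1 - K * sum3 (fun j => V j s0 ^ 2) <> 0 ->
  is_derive (fun s => (1 - K) / (1 - K * sum3 (fun j => V j s ^ 2))) s0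
    ((1 - K) * K * sum3 (fun j => 2 * V j s0 * V' j) / ((1 - K * sum3 (fun j => V j s0 ^ 2)) ^ 2)).
Proof.
  intros HV Hw.
  assert (EV : forall k, (k < 3)%nat -> Derive (fun x => V k x) s0 = V' k).
  { intros k Hk. apply is_derive_unique. apply HV; auto. }
  assert (XV : forall k, (k < 3)%nat -> ex_derive (fun x => V k x) s0) by (intros k Hk; eexists; apply HV; auto).
  unfold sum3 in *.
  auto_derive.
  - repeat match goal with
      | |- _ /\ _ => apply conj
      | |- True => exact I
      | |- ex_derive (fun x => V _ x) _ => apply XV; lia
      | |- _ <> 0 => intros HH; apply Hw; rewrite <- HH; ring
      end.
  - rewrite !EV by lia. field. intros HH; apply Hw; rewrite <- HH; ring.
Qed.

Lemma Efun_deriv al K t (V : nat -> R -> R) (DV : nat -> nat -> R -> R) (DL : nat -> R -> R)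
  (V' : nat -> R) (DV' : nat -> nat -> R) (DL' : nat -> R) s0 i :
  (i < 3)%nat ->
  (forall k, (k < 3)%nat -> is_derive (V k) s0 (V' k)) ->
  (forall k m, (k < 3)%nat -> (m < 3)%nat -> is_derive (DV k m) s0 (DV' k m)) ->
  (forall k, (k < 3)%nat -> is_derive (DL k) s0 (DL' k)) ->
  1 - K * sum3 (fun j => V j s0 ^ 2) <> 0 ->
  is_derive (fun s => Efun al K t (fun k => V k s) (fun k m => DV k m s) (fun k => DL k s) i) s0
    (Efun' al K t (fun k => V k s0) (fun k m => DV k m s0) (fun k => DL k s0) V' DV' DL' i).
Proof.
  intros Hi HV HDV HDL Hw.
  unfold Efun, Efun'.
  apply (EfunP_deriv _ _ _ _ V DV DL (fun s => (1 - K) / (1 - K * sum3 (fun j => V j s ^ 2)))).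
  all: auto.
  apply Q_deriv; auto.
Qed.

Lemma slice_deriv t0 t1 F k p s0 : smooth_on t0 t1 F -> (k < 4)%nat ->
  t0 < get 0 (upd k s0 p) < t1 ->
  is_derive (fun s => ap F (upd k s p)) s0 (ap (pd k F) (upd k s0 p)).
Proof.
  intros HF Hk Hq.
  pose proof (smooth_expd t0 t1 F k (upd k s0 p) HF Hk Hq) as H.
  apply expd_ap in H. rewrite get_upd_same in H.
  rewrite pd_ap. rewrite get_upd_same.
  assert (E : forall s, ap F (upd k s (upd k s0 p)) = ap F (upd k s p)).
  { intros s. rewrite upd_upd_same. reflexivity. }
  destruct H as [l Hl].
  assert (Hl' : is_derive (fun s => ap F (upd k s p)) s0 l).
  { eapply is_derive_ext; [| exact Hl]. intros s; apply E. }
  assert (D : Derive (fun s => ap F (upd k s (upd k s0 p))) s0 = l).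
  { apply is_derive_unique. exact Hl. }
  rewrite D. exact Hl'.
Qed.

Lemma vsq_small_ne v t x y z K : 0 <= K <= 1/3 -> sqrt (vsq v t x y z) < 1/10 ->
  1 - K * vsq v t x y z <> 0.
Proof.
  intros HK Hs.
  assert (H0 : 0 <= vsq v t x y z).
  { unfold vsq, sum3. assert (forall a : R, 0 <= a ^ 2) by (intros; nra). 
    pose proof (H (v 0%nat t x y z)). pose proof (H (v 1%nat t x y z)). pose proof (H (v 2%nat t x y z)). lra. }
  assert (H1 : vsq v t x y z < 1/100).
  { rewrite <- (sqrt_sqrt (vsq v t x y z)) by auto.
    pose proof (sqrt_pos (vsq v t x y z)). nra. }
  nra.
Qed.

Lemma sol_E al K t0 t1 v L j q : is_solution al K t0 t1 v L -> (j < 3)%nat ->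
  t0 < get 0 q < t1 ->
  ap (pd 0 (v j)) q = Efun al K (get 0 q) (fun k => ap (v k) q)
     (fun k m => ap (dx k (v m)) q) (fun k => ap (dx k L) q) j.
Proof.
  intros Hs Hj Hq. destruct q as [[[t x] y] z]. unfold ap, get in *; cbn [fst snd] in *.
  destruct (Hs t x y z Hq) as [H1 _]. rewrite (H1 j Hj). reflexivity.
Qed.

Lemma dxE al K t0 t1 v L i j t x y z :
  0 <= K <= 1/3 ->
  (forall k, (k < 3)%nat -> smooth_on t0 t1 (v k)) -> smooth_on t0 t1 L ->
  is_solution al K t0 t1 v L ->
  (forall t x y z, t0 < t < t1 -> sqrt (vsq v t x y z) < 1/10) ->
  (i < 3)%nat -> (j < 3)%nat -> t0 < t < t1 ->
  dx i (pd 0 (v j)) t x y z =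
  Efun' al K t (fun k => v k t x y z) (fun k m => dx k (v m) t x y z) (fun k => dx k L t x y z)
    (fun k => dx i (v k) t x y z) (fun k m => dx i (dx k (v m)) t x y z)
    (fun k => dx i (dx k L) t x y z) j.
Proof.
  intros HK Hv HL Hs Hsm Hi Hj Ht.
  set (p := (t, x, y, z)).
  change (dx i (pd 0 (v j)) t x y z) with (ap (pd (S i) (pd 0 (v j))) p).
  rewrite pd_ap.
  assert (Hdom : forall s, t0 < get 0 (upd (S i) s p) < t1).
  { intros s. rewrite get0_updS. exact Ht. }
  rewrite (Derive_ext _ (fun s => Efun al K t (fun k => ap (v k) (upd (S i) s p))
     (fun k m => ap (dx k (v m)) (upd (S i) s p)) (fun k => ap (dx k L) (upd (S i) s p)) j)).
  2: { intros s. rewrite (sol_E al K t0 t1 v L j); auto. rewrite get0_updS. reflexivity. }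
  apply is_derive_unique.
  set (s0 := get (S i) p).
  assert (Pp : upd (S i) s0 p = p) by apply upd_get.
  assert (SI : (S i < 4)%nat) by lia.
  pose proof (Efun_deriv al K t (fun k s => ap (v k) (upd (S i) s p))
     (fun k m s => ap (dx k (v m)) (upd (S i) s p)) (fun k s => ap (dx k L) (upd (S i) s p))
     (fun k => ap (pd (S i) (v k)) (upd (S i) s0 p))
     (fun k m => ap (pd (S i) (dx k (v m))) (upd (S i) s0 p))
     (fun k => ap (pd (S i) (dx k L)) (upd (S i) s0 p)) s0 j Hj) as H.
  cbv beta in H. rewrite Pp in H. apply H.
  - intros k Hk. pose proof (slice_deriv t0 t1 (v k) (S i) p s0 (Hv k Hk) SI (Hdom s0)) as HH.
    rewrite Pp in HH. exact HH.
  - intros k m Hk Hm.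
    assert (Sm : smooth_on t0 t1 (dx k (v m))) by (apply smooth_pd; auto; lia).
    pose proof (slice_deriv t0 t1 _ (S i) p s0 Sm SI (Hdom s0)) as HH.
    rewrite Pp in HH. exact HH.
  - intros k Hk.
    assert (Sm : smooth_on t0 t1 (dx k L)) by (apply smooth_pd; auto; lia).
    pose proof (slice_deriv t0 t1 _ (S i) p s0 Sm SI (Hdom s0)) as HH.
    rewrite Pp in HH. exact HH.
  - apply (vsq_small_ne v t x y z K); auto.
Qed.

Definition G3 (t0 t1 : R) (g : R -> R -> R -> R) : Prop := Good t0 t1 (fun _ x y z => g x y z).

Lemma G3_of t0 t1 F t : Good t0 t1 F -> t0 < t < t1 -> G3 t0 t1 (F t).
Proof. intros; apply Good_freeze; auto. Qed.

Lemma G3_plus t0 t1 f g : G3 t0 t1 f -> G3 t0 t1 g -> G3 t0 t1 (fun x y z => f x y z + g x y z).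
Proof. intros; apply (Good_plus t0 t1 (fun _ => f) (fun _ => g)); auto. Qed.
Lemma G3_minus t0 t1 f g : G3 t0 t1 f -> G3 t0 t1 g -> G3 t0 t1 (fun x y z => f x y z - g x y z).
Proof. intros; apply (Good_minus t0 t1 (fun _ => f) (fun _ => g)); auto. Qed.
Lemma G3_mult t0 t1 f g : G3 t0 t1 f -> G3 t0 t1 g -> G3 t0 t1 (fun x y z => f x y z * g x y z).
Proof. intros; apply (Good_mult t0 t1 (fun _ => f) (fun _ => g)); auto. Qed.
Lemma G3_opp t0 t1 f : G3 t0 t1 f -> G3 t0 t1 (fun x y z => - f x y z).
Proof. intros; apply (Good_opp t0 t1 (fun _ => f)); auto. Qed.
Lemma G3_const t0 t1 c : G3 t0 t1 (fun _ _ _ => c).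
Proof. apply Good_const. Qed.
Lemma G3_pow2 t0 t1 f : G3 t0 t1 f -> G3 t0 t1 (fun x y z => f x y z ^ 2).
Proof. intros; apply (Good_pow2 t0 t1 (fun _ => f)); auto. Qed.
Lemma G3_div t0 t1 f g : G3 t0 t1 f -> G3 t0 t1 g -> (forall x y z, g x y z <> 0) ->
  G3 t0 t1 (fun x y z => f x y z / g x y z).
Proof. intros; apply (Good_div t0 t1 (fun _ => f) (fun _ => g)); auto. Qed.
Lemma G3_sum3 t0 t1 (g : nat -> R -> R -> R -> R) : (forall i, (i < 3)%nat -> G3 t0 t1 (g i)) ->
  G3 t0 t1 (fun x y z => sum3 (fun i => g i x y z)).
Proof. intros H. unfold sum3. apply G3_plus; [apply G3_plus|]; apply H; lia. Qed.

Lemma int3_lin3 t0 t1 f g a b : t0 < t1 -> G3 t0 t1 f -> G3 t0 t1 g ->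
  int3 (fun x y z => a * f x y z + b * g x y z) = a * int3 f + b * int3 g.
Proof.
  intros H01 Hf Hg.
  apply (int3_lin t0 t1 (fun _ => f) (fun _ => g) ((t0 + t1) / 2) a b); auto. lra.
Qed.

Lemma int3_le3 t0 t1 f g : t0 < t1 -> G3 t0 t1 f -> G3 t0 t1 g ->
  (forall x y z, f x y z <= g x y z) -> int3 f <= int3 g.
Proof.
  intros H01 Hf Hg H.
  apply (int3_le t0 t1 (fun _ => f) (fun _ => g) ((t0 + t1) / 2)); auto. lra.
Qed.

Lemma int3_plus3 t0 t1 f g : t0 < t1 -> G3 t0 t1 f -> G3 t0 t1 g ->
  int3 (fun x y z => f x y z + g x y z) = int3 f + int3 g.
Proof.
  intros. transitivity (int3 (fun x y z => 1 * f x y z + 1 * g x y z)).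
  apply int3_ext; intros; ring. rewrite (int3_lin3 t0 t1 f g 1 1) by auto. ring.
Qed.

Lemma int3_minus3 t0 t1 f g : t0 < t1 -> G3 t0 t1 f -> G3 t0 t1 g ->
  int3 (fun x y z => f x y z - g x y z) = int3 f - int3 g.
Proof.
  intros. transitivity (int3 (fun x y z => 1 * f x y z + (-1) * g x y z)).
  apply int3_ext; intros; ring. rewrite (int3_lin3 t0 t1 f g 1 (-1)) by auto. ring.
Qed.

Lemma int3_scal3 t0 t1 f a : t0 < t1 -> G3 t0 t1 f ->
  int3 (fun x y z => a * f x y z) = a * int3 f.
Proof.
  intros. transitivity (int3 (fun x y z => a * f x y z + 0 * f x y z)).
  apply int3_ext; intros; ring. rewrite (int3_lin3 t0 t1 f f a 0) by auto. ring.
Qed.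

Lemma int3_abs3 t0 t1 f g : t0 < t1 -> G3 t0 t1 f -> G3 t0 t1 g ->
  (forall x y z, Rabs (f x y z) <= g x y z) -> Rabs (int3 f) <= int3 g.
Proof.
  intros H01 Hf Hg H. apply Rabs_le. split.
  - assert (E : int3 (fun x y z => - g x y z) = - int3 g).
    { transitivity (int3 (fun x y z => (-1) * g x y z)).
      apply int3_ext; intros; ring. rewrite (int3_scal3 t0 t1 g (-1)) by auto. ring. }
    rewrite <- E. apply (int3_le3 t0 t1); auto. apply G3_opp; auto.
    intros x y z. specialize (H x y z). apply Rabs_le_between in H. lra.
  - apply (int3_le3 t0 t1); auto. intros x y z. specialize (H x y z).
    apply Rabs_le_between in H. lra.
Qed.

Lemma is_derive_sum3 (F : nat -> R -> R) (dF : nat -> R) t :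
  (forall i, (i < 3)%nat -> is_derive (F i) t (dF i)) ->
  is_derive (fun s => sum3 (fun i => F i s)) t (sum3 dF).
Proof.
  intros H. unfold sum3.
  apply (is_derive_plus (fun s => F 0%nat s + F 1%nat s) (F 2%nat)); [apply (is_derive_plus (F 0%nat) (F 1%nat))|]; apply H; lia.
Qed.

Lemma is_derive_sq (f : R -> R) (t d : R) : is_derive f t d -> is_derive (fun s => f s ^ 2) t (2 * f t * d).
Proof.
  intros H.
  pose proof (@is_derive_mult R_AbsRing f f t d d H H (fun n m => Rmult_comm n m)) as Hm.
  simpl in Hm.
  eapply is_derive_ext. 2: { replace (2 * f t * d) with (d * f t + f t * d) by ring. exact Hm. }
  intros s. change (f s * f s = f s ^ 2). ring.
Qed.

Definition Hf (v : vfield) : field := fun t x y z =>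
  sum3 (fun i => sum3 (fun j => 2 * dx i (v j) t x y z * pd 0 (dx i (v j)) t x y z)).

Lemma energy_deriv t0 t1 v t :
  (forall k, (k < 3)%nat -> smooth_on t0 t1 (v k)) -> t0 < t < t1 ->
  is_derive (energy v) t (/ 2 * int3 (Hf v t)).
Proof.
  intros Hv Ht.
  assert (Sd : forall i j, (i < 3)%nat -> (j < 3)%nat -> smooth_on t0 t1 (dx i (v j))).
  { intros i j Hi Hj. apply smooth_pd; auto. lia. }
  unfold energy.
  apply (is_derive_scal (fun s => int3 (Dvsq v s))).
  apply (int3_deriv t0 t1); auto.
  - unfold Dvsq. apply Good_sum3. intros i Hi. apply Good_sum3. intros j Hj.
    apply Good_pow2. apply smooth_Good0. auto.
  - unfold Hf. apply Good_sum3. intros i Hi. apply Good_sum3. intros j Hj.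
    apply Good_mult. apply Good_mult. apply Good_const. apply smooth_Good0; apply Sd; auto.
    apply smooth_Good0. apply smooth_pd. apply Sd; auto. lia.
  - intros s x y z Hs. unfold Dvsq, Hf.
    apply is_derive_sum3. intros i Hi. apply is_derive_sum3. intros j Hj.
    replace (2 * dx i (v j) s x y z * pd 0 (dx i (v j)) s x y z)
      with (2 * dx i (v j) s x y z * pd 0 (dx i (v j)) s x y z) by ring.
    apply (is_derive_sq (fun u => dx i (v j) u x y z)).
    pose proof (smooth_ex t0 t1 (dx i (v j)) 0 s x y z (Sd i j Hi Hj) ltac:(lia) Hs) as HE.
    destruct HE as [l Hl]. simpl.
    assert (D : Derive (fun u => dx i (v j) u x y z) s = l) by (apply is_derive_unique; exact Hl).
    rewrite D. exact Hl.
Qed.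

Lemma Derive_shift1 (g : R -> R) x : ex_derive g (x + 1) -> (forall s, g (s + 1) = g s) ->
  Derive g (x + 1) = Derive g x.
Proof.
  intros Hex Hp.
  assert (E : Derive g x = Derive (fun s => g (s + 1)) x).
  { apply Derive_ext. intros s. rewrite Hp. reflexivity. }
  rewrite E. rewrite (Derive_comp g (fun s => s + 1) x); auto.
  2: { auto_derive; auto. }
  replace (Derive (fun s => s + 1) x) with 1. ring.
  symmetry. apply is_derive_unique. auto_derive; auto. 
Qed.

Definition Per (F : field) (t : R) : Prop :=
  forall x y z, F t (x + 1) y z = F t x y z /\ F t x (y + 1) z = F t x y z /\ F t x y (z + 1) = F t x y z.

Lemma per_dx t0 t1 F t i : smooth_on t0 t1 F -> t0 < t < t1 -> Per F t -> (i < 3)%nat -> Per (dx i F) t.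
Proof.
  intros HF Ht HP Hi.
  destruct i as [|[|[|i]]]; try lia; intros x y z; unfold dx, pd; (split; [|split]);
  match goal with
  | |- Derive (fun s => F t s ?y ?z) (?x + 1) = _ =>
      apply Derive_shift1; [exact (smooth_ex t0 t1 F 1 t (x+1) y z HF ltac:(lia) Ht)
                           | intros s; apply (proj1 (HP s y z))]
  | |- Derive (fun s => F t ?x s ?z) (?y + 1) = _ =>
      apply Derive_shift1; [exact (smooth_ex t0 t1 F 2 t x (y+1) z HF ltac:(lia) Ht)
                           | intros s; apply (proj1 (proj2 (HP x s z)))]
  | |- Derive (fun s => F t ?x ?y s) (?z + 1) = _ =>
      apply Derive_shift1; [exact (smooth_ex t0 t1 F 3 t x y (z+1) HF ltac:(lia) Ht)
                           | intros s; apply (proj2 (proj2 (HP x y s)))]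
  | |- _ => apply Derive_ext; intros s;
            first [apply (proj1 (HP _ _ _)) | apply (proj1 (proj2 (HP _ _ _)))
                  | apply (proj2 (proj2 (HP _ _ _)))]
  end.
Qed.

Lemma Per_mult F G t : Per F t -> Per G t -> Per (fun t x y z => F t x y z * G t x y z) t.
Proof.
  intros HF HG x y z. destruct (HF x y z) as [A1 [A2 A3]]. destruct (HG x y z) as [B1 [B2 B3]].
  rewrite A1, A2, A3, B1, B2, B3. auto.
Qed.
Lemma Per_plus F G t : Per F t -> Per G t -> Per (fun t x y z => F t x y z + G t x y z) t.
Proof.
  intros HF HG x y z. destruct (HF x y z) as [A1 [A2 A3]]. destruct (HG x y z) as [B1 [B2 B3]].
  rewrite A1, A2, A3, B1, B2, B3. auto.
Qed.
Lemma Per_const c t : Per (fun _ _ _ _ => c) t.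
Proof. intros x y z; auto. Qed.
Lemma Per_pow2 F t : Per F t -> Per (fun t x y z => F t x y z ^ 2) t.
Proof.
  intros HF x y z. destruct (HF x y z) as [A1 [A2 A3]]. rewrite A1, A2, A3. auto.
Qed.
Lemma Per_sum3 (G : nat -> field) t : (forall i, (i < 3)%nat -> Per (G i) t) ->
  Per (fun t x y z => sum3 (fun i => G i t x y z)) t.
Proof.
  intros H. unfold sum3.
  apply (Per_plus (fun t x y z => G 0%nat t x y z + G 1%nat t x y z) (G 2%nat)).
  apply (Per_plus (G 0%nat) (G 1%nat)). all: apply H; lia.
Qed.

Lemma RInt_zero01 : RInt (fun _ : R => 0) 0 1 = 0.
Proof. rewrite RInt_const. unfold scal; simpl. unfold mult; simpl. ring. Qed.

Lemma int3_zero_of (f : R -> R -> R -> R) : (forall x, RInt (fun y => RInt (fun z => f x y z) 0 1) 0 1 = 0) ->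
  int3 f = 0.
Proof.
  intros H. unfold int3. transitivity (RInt (fun _ : R => 0) 0 1).
  apply RInt_ext; intros; apply H. apply RInt_zero01.
Qed.

Lemma RInt_deriv_per (f df : R -> R) :
  (forall s, is_derive f s (df s)) -> (forall s, continuous df s) -> f 1 = f 0 ->
  RInt df 0 1 = 0.
Proof.
  intros Hd Hc Hp. apply is_RInt_unique.
  pose proof (@is_RInt_derive R_CompleteNormedModule f df 0 1 (fun x _ => Hd x) (fun x _ => Hc x)) as H.
  change (minus (f 1) (f 0)) with (f 1 - f 0) in H.
  rewrite Hp, Rminus_diag in H. exact H.
Qed.

Lemma int3_dz_z t0 t1 (h dh : field) t : t0 < t < t1 -> Good t0 t1 dh ->
  (forall x y z, is_derive (fun s => h t x y s) z (dh t x y z)) -> Per h t ->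
  int3 (dh t) = 0.
Proof.
  intros Ht Hdh Hd HP. apply int3_zero_of. intros x.
  transitivity (RInt (fun _ : R => 0) 0 1); [| apply RInt_zero01].
  apply RInt_ext. intros y _.
  apply (RInt_deriv_per (fun s => h t x y s)).
  - intros s; apply Hd.
  - intros s. apply (continuous_comp (fun r : R => (t, x, y, r)) (ap dh)). ctup. apply Hdh; auto.
  - destruct (HP x y 0) as [_ [_ A]]. rewrite Rplus_0_l in A. exact A.
Qed.

Lemma int3_dz_y t0 t1 (h dh : field) t : t0 < t < t1 -> Good t0 t1 h -> Good t0 t1 dh ->
  (forall x y z, is_derive (fun s => h t x s z) y (dh t x y z)) -> Per h t ->
  int3 (dh t) = 0.
Proof.
  intros Ht Hh Hdh Hd HP. apply int3_zero_of. intros x.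
  change (RInt (fun y => I1 dh (t, x, y)) 0 1 = 0).
  apply (RInt_deriv_per (fun y => I1 h (t, x, y))).
  - intros y. unfold I1; simpl.
    apply (RInt_param_deriv (fun u z => h t x u z) (fun u z => dh t x u z)).
    + apply filter_forall. intros u s. apply Hd.
    + intros s. apply (continuous_comp (fun r : R * R => (t, x, fst r, snd r)) (ap dh)). ctup. apply Hdh; auto.
    + apply filter_forall. intros u s.
      apply (continuous_comp (fun r : R => (t, x, u, r)) (ap h)). ctup. apply Hh; auto.
  - intros s. apply (continuous_comp (fun r : R => (t, x, r)) (I1 dh)). ctup.
    apply (I1_cont t0 t1); auto.
  - unfold I1; simpl. apply RInt_ext. intros z _.
    destruct (HP x 0 z) as [_ [A _]]. rewrite Rplus_0_l in A. exact A.
Qed.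

Lemma int3_dz_x t0 t1 (h dh : field) t : t0 < t < t1 -> Good t0 t1 h -> Good t0 t1 dh ->
  (forall x y z, is_derive (fun s => h t s y z) x (dh t x y z)) -> Per h t ->
  int3 (dh t) = 0.
Proof.
  intros Ht Hh Hdh Hd HP.
  rewrite int3_I2.
  apply (RInt_deriv_per (fun x => I2 h (t, x))).
  - intros x. unfold I2.
    apply (RInt_param_deriv (fun u y => I1 h (t, u, y)) (fun u y => I1 dh (t, u, y))).
    + apply filter_forall. intros u y. unfold I1; simpl.
      apply (RInt_param_deriv (fun u z => h t u y z) (fun u z => dh t u y z)).
      * apply filter_forall. intros u' s. apply Hd.
      * intros s. apply (continuous_comp (fun r : R * R => (t, fst r, y, snd r)) (ap dh)). ctup. apply Hdh; auto.
      * apply filter_forall. intros u' s.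
        apply (continuous_comp (fun r : R => (t, u', y, r)) (ap h)). ctup. apply Hh; auto.
    + intros s. apply (continuous_comp (fun r : R * R => (t, fst r, snd r)) (I1 dh)). ctup.
      apply (I1_cont t0 t1); auto.
    + apply filter_forall. intros u s.
      apply (continuous_comp (fun r : R => (t, u, r)) (I1 h)). ctup. apply (I1_cont t0 t1); auto.
  - intros s. apply (continuous_comp (fun r : R => (t, r)) (I2 dh)). ctup.
    apply (I2_cont t0 t1); auto.
  - unfold I2, I1; simpl. apply RInt_ext. intros y _. apply RInt_ext. intros z _.
    destruct (HP 0 y z) as [A _]. rewrite Rplus_0_l in A. exact A.
Qed.

Fixpoint lmax (G : Compactness.Tn 3 R -> R) (l : list (Compactness.Tn 3 R)) : R :=
  match l with nil => 0 | t :: l' => Rmax (Rabs (G t) + 1) (lmax G l') end.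

Lemma lmax_in G l t : In t l -> Rabs (G t) + 1 <= lmax G l.
Proof.
  induction l as [|a l IH]; simpl; intros H; [destruct H|].
  destruct H as [H|H]; [subst; apply Rmax_l|].
  eapply Rle_trans; [apply IH; auto | apply Rmax_r].
Qed.

Lemma bounded_cube (g : R -> R -> R -> R) :
  (forall x y z, continuous (fun q : R * R * R => g (fst (fst q)) (snd (fst q)) (snd q)) (x, y, z)) ->
  exists B, forall x y z, 0 <= x <= 1 -> 0 <= y <= 1 -> 0 <= z <= 1 -> Rabs (g x y z) <= B.
Proof.
  intros Hc.
  set (G := fun p : Compactness.Tn 3 R => match p with (x, (y, (z, _))) => g x y z end).
  assert (Hd : forall p : Compactness.Tn 3 R, {d : posreal | forall x' y' z',
     Rabs (x' - fst p) < d -> Rabs (y' - fst (snd p)) < d -> Rabs (z' - fst (snd (snd p))) < d ->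
     Rabs (g x' y' z' - G p) < 1}).
  { intros [x [y [z u]]]. apply constructive_indefinite_description.
    pose proof (proj1 (filterlim_locally _ _) (Hc x y z) (mkposreal 1 Rlt_0_1)) as H.
    destruct H as [d Hd]. exists d. intros x' y' z' H1 H2 H3.
    apply (Hd (x', y', z')). repeat split; assumption. }
  set (delta := fun p => proj1_sig (Hd p)).
  pose proof (Compactness.compactness_list 3 (0, (0, (0, tt))) (1, (1, (1, tt))) delta) as Hcl.
  apply NNPP. intros Hneg. apply Hcl. intros [l Hl]. apply Hneg.
  exists (lmax G l). intros x y z Hx Hy Hz.
  destruct (Hl (x, (y, (z, tt)))) as [t [Hin [Hb Hcl']]].
  { simpl. repeat split; lra. }
  destruct t as [t1 [t2 [t3 u]]]. simpl in Hcl'.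
  destruct Hcl' as [C1 [C2 [C3 _]]].
  pose proof (proj2_sig (Hd (t1, (t2, (t3, u)))) x y z C1 C2 C3) as E.
  pose proof (lmax_in G l _ Hin) as M.
  simpl in E, M.
  apply Rabs_def2 in E. 
  pose proof (Rabs_le_between' (g t1 t2 t3)).
  unfold Rabs at 1. destruct (Rcase_abs (g x y z));
  unfold Rabs in M; destruct (Rcase_abs (g t1 t2 t3)); lra.
Qed.

Lemma per_nat (h : R -> R) : (forall s, h (s + 1) = h s) ->
  forall n s, h (s + INR n) = h s /\ h (s - INR n) = h s.
Proof.
  intros Hp n. induction n as [|n IH]; intros s.
  - simpl. rewrite Rplus_0_r, Rminus_0_r. auto.
  - rewrite S_INR. split.
    + replace (s + (INR n + 1)) with ((s + INR n) + 1) by ring. rewrite Hp. apply IH.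
    + rewrite <- (proj2 (IH s)). rewrite <- (Hp (s - (INR n + 1))).
      f_equal. ring.
Qed.

Lemma per_frac (h : R -> R) : (forall s, h (s + 1) = h s) ->
  forall x, exists x0, 0 <= x0 <= 1 /\ h x = h x0.
Proof.
  intros Hp x. destruct (base_Int_part x) as [B1 B2].
  set (m := Int_part x) in *.
  exists (x - IZR m). split; [lra|].
  destruct (Z_le_gt_dec 0 m) as [Hm|Hm].
  - rewrite <- (Z2Nat.id m) in * by lia. rewrite <- INR_IZR_INZ.
    rewrite <- (proj1 (per_nat h Hp (Z.to_nat m) (x - INR (Z.to_nat m)))). f_equal. ring.
  - assert (E : IZR m = - INR (Z.to_nat (- m))).
    { rewrite INR_IZR_INZ. rewrite Z2Nat.id by lia. rewrite opp_IZR. ring. }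
    rewrite E.
    rewrite <- (proj2 (per_nat h Hp (Z.to_nat (- m)) (x - - INR (Z.to_nat (- m))))). f_equal. ring.
Qed.

Lemma bounded_per (g : R -> R -> R -> R) :
  (forall x y z, continuous (fun q : R * R * R => g (fst (fst q)) (snd (fst q)) (snd q)) (x, y, z)) ->
  (forall x y z, g (x + 1) y z = g x y z /\ g x (y + 1) z = g x y z /\ g x y (z + 1) = g x y z) ->
  exists B, forall x y z, Rabs (g x y z) <= B.
Proof.
  intros Hc Hp. destruct (bounded_cube g Hc) as [B HB]. exists B. intros x y z.
  destruct (per_frac (fun s => g s y z) (fun s => proj1 (Hp s y z)) x) as [x0 [Hx0 E1]].
  destruct (per_frac (fun s => g x0 s z) (fun s => proj1 (proj2 (Hp x0 s z))) y) as [y0 [Hy0 E2]].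
  destruct (per_frac (fun s => g x0 y0 s) (fun s => proj2 (proj2 (Hp x0 y0 s))) z) as [z0 [Hz0 E3]].
  simpl in E1, E2, E3. rewrite E1, E2, E3. apply HB; auto.
Qed.

Lemma sup3_spec (g : R -> R -> R -> R) : (exists B, forall x y z, g x y z <= B) ->
  (forall x y z, g x y z <= sup3 g) /\ (forall B, (forall x y z, g x y z <= B) -> sup3 g <= B).
Proof.
  intros [B HB]. unfold sup3.
  destruct (Lub_Rbar_correct (fun r => exists x y z, r = g x y z)) as [Hub Hleast].
  assert (H0 : Rbar_le (g 0 0 0) (Lub_Rbar (fun r => exists x y z, r = g x y z))).
  { apply Hub. exists 0, 0, 0. reflexivity. }
  assert (H1 : Rbar_le (Lub_Rbar (fun r => exists x y z, r = g x y z)) B).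
  { apply Hleast. intros r [x [y [z Hr]]]. subst. simpl. apply HB. }
  destruct (Lub_Rbar (fun r => exists x y z, r = g x y z)) as [l| |] eqn:El;
    simpl in H0, H1; try contradiction.
  split.
  - intros x y z. apply (Hub (g x y z)). exists x, y, z. reflexivity.
  - intros B' HB'. apply (Hleast (Finite B')). intros r [x [y [z Hr]]]. subst. simpl. apply HB'.
Qed.

Definition RR (K ta A : R) (V : nat -> R) (Dv : nat -> nat -> R) (DL : nat -> R) (i j : nat) : R :=
  let w := sum3 (fun k => V k ^ 2) in
  let w' := sum3 (fun k => 2 * V k * Dv i k) in
  let Q := (1 - K) / (1 - K * w) in
  let q' := (1 - K) * K * w' / ((1 - K * w) ^ 2) in
  let D := sum3 (fun k => Dv k k) in
  let S := sum3 (fun k => V k * DL k) in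
  K / (1 + K) * ta * w' * DL j - ta * sum3 (fun k => Dv i k * Dv k j)
  + ta * ((- q') * V j * D + (1 - Q) * Dv i j * D)
  + ta * ((1 - K) / (1 + K)) * ((- q') * V j * S + (1 - Q) * Dv i j * S
                                + (1 - Q) * V j * sum3 (fun k => Dv i k * DL k))
  + A * (q' * w * V j + Q * w' * V j + Q * w * Dv i j).

Lemma Efun'_decomp al K t (V : nat -> R) (Dv : nat -> nat -> R) (DL : nat -> R)
   (D2v : nat -> nat -> nat -> R) (D2L : nat -> nat -> R) i j :
  Efun' al K t V Dv DL (fun k => Dv i k) (fun k m => D2v i k m) (fun k => D2L i k) j =
  - (al * (1 - 3 * K) / t) * Dv i j
  - K / (1 + K) * Rpower t (- al) * (1 - sum3 (fun k => V k ^ 2)) * D2L i j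
  - Rpower t (- al) * sum3 (fun k => V k * D2v i k j)
  + Rpower t (- al) * (1 - (1 - K) / (1 - K * sum3 (fun k => V k ^ 2))) * V j * sum3 (fun k => D2v i k k)
  + Rpower t (- al) * ((1 - K) / (1 + K)) * (1 - (1 - K) / (1 - K * sum3 (fun k => V k ^ 2))) * V j
       * sum3 (fun k => V k * D2L i k)
  + RR K (Rpower t (- al)) (al * (1 - 3 * K) / t) V Dv DL i j.
Proof. unfold Efun', EfunP', RR, sum3. ring. Qed.

Lemma mul_abs_le x y X Y : Rabs x <= X -> Rabs y <= Y -> Rabs (x * y) <= X * Y.
Proof. intros H1 H2. rewrite Rabs_mult. apply Rmult_le_compat; auto using Rabs_pos. Qed.
Lemma add_abs_le x y X Y : Rabs x <= X -> Rabs y <= Y -> Rabs (x + y) <= X + Y.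
Proof. intros H1 H2. eapply Rle_trans; [apply Rabs_triang|]. lra. Qed.
Lemma sub_abs_le x y X Y : Rabs x <= X -> Rabs y <= Y -> Rabs (x - y) <= X + Y.
Proof. intros H1 H2. eapply Rle_trans; [apply Rabs_triang|]. rewrite Rabs_Ropp. lra. Qed.

Lemma abs3 a b c A B C : Rabs a <= A -> Rabs b <= B -> Rabs c <= C -> Rabs (a + b + c) <= A + B + C.
Proof. intros. apply add_abs_le; [apply add_abs_le|]; auto. Qed.

Lemma RR_bound K al ta A W M Vb (V : nat -> R) (Dv : nat -> nat -> R) (DL : nat -> R) i j :
  0 <= K <= 1/3 -> 0 < al -> 0 <= ta <= W -> Rabs A <= al * W ->
  (forall k, (k < 3)%nat -> Rabs (V k) <= 1/10) ->
  (forall k, (k < 3)%nat -> Rabs (V k) <= Vb) ->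
  (forall a b, (a < 3)%nat -> (b < 3)%nat -> Rabs (Dv a b) <= M) ->
  (i < 3)%nat -> (j < 3)%nat ->
  Rabs (Dv i j * RR K ta A V Dv DL i j) <=
  W * (8 * M ^ 3 + 4 * M * Rabs (Dv i j) * (Rabs (DL 0%nat) + Rabs (DL 1%nat) + Rabs (DL 2%nat))
       + 3 * al * M ^ 2 * Vb).
Proof.
  intros HK Hal Hta HA HV1 HVb HDv Hi Hj.
  set (l := Rabs (DL 0%nat) + Rabs (DL 1%nat) + Rabs (DL 2%nat)).
  assert (Hl0 : 0 <= l) by (unfold l; pose proof (Rabs_pos (DL 0%nat)); pose proof (Rabs_pos (DL 1%nat)); pose proof (Rabs_pos (DL 2%nat)); lra).
  assert (HM0 : 0 <= M) by (eapply Rle_trans; [apply Rabs_pos | apply (HDv 0%nat 0%nat); lia]).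
  assert (HVb0 : 0 <= Vb) by (eapply Rle_trans; [apply Rabs_pos | apply (HVb 0%nat); lia]).
  assert (HW0 : 0 <= W) by lra.
  assert (Hsq : forall x, Rabs x <= 1/10 -> Rabs x <= Vb -> 0 <= x ^ 2 <= 1/100 /\ x ^ 2 <= 1/10 * Vb).
  { intros x H1 H2. rewrite <- pow2_abs. pose proof (Rabs_pos x). split; [split|]; nra. }
  destruct (Hsq _ (HV1 0%nat ltac:(lia)) (HVb 0%nat ltac:(lia))) as [[S0a S0b] S0c].
  destruct (Hsq _ (HV1 1%nat ltac:(lia)) (HVb 1%nat ltac:(lia))) as [[S1a S1b] S1c].
  destruct (Hsq _ (HV1 2%nat ltac:(lia)) (HVb 2%nat ltac:(lia))) as [[S2a S2b] S2c].
  unfold RR. cbv zeta.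
  set (w := sum3 (fun k => V k ^ 2)).
  assert (Hw0 : 0 <= w <= 3/100) by (unfold w, sum3; lra).
  assert (Hw : Rabs w <= 3/100) by (rewrite Rabs_right; lra).
  assert (HwV : Rabs w <= 3/10 * Vb) by (rewrite Rabs_right; unfold w, sum3 in *; lra).
  set (d := 1 - K * w).
  assert (Hd : 99/100 <= d <= 1) by (unfold d; nra).
  set (Q := (1 - K) / d).
  assert (HQd : Q * d = 1 - K) by (unfold Q; field; lra).
  assert (HKd : 1 - K <= d) by (unfold d; nra).
  assert (HQ01 : 0 <= Q <= 1).
  { split; apply (Rmult_le_reg_r d); try lra; rewrite HQd; lra. }
  assert (HQ : Rabs Q <= 1) by (apply Rabs_le; lra).
  assert (HQ1 : Rabs (1 - Q) <= 1) by (apply Rabs_le; lra).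
  set (wp := sum3 (fun k => 2 * V k * Dv i k)).
  assert (Hwp6 : Rabs wp <= 6/10 * M).
  { unfold wp, sum3. eapply Rle_trans.
    apply abs3; (apply mul_abs_le; [apply mul_abs_le; [apply Rle_refl | apply HV1; lia] | apply HDv; lia]).
    rewrite Rabs_right by lra. lra. }
  assert (HwpV : Rabs wp <= 6 * Vb * M).
  { unfold wp, sum3. eapply Rle_trans.
    apply abs3; (apply mul_abs_le; [apply mul_abs_le; [apply Rle_refl | apply HVb; lia] | apply HDv; lia]).
    rewrite Rabs_right by lra. lra. }
  set (qp := (1 - K) * K * wp / d ^ 2).
  assert (Hqp : Rabs qp <= 3/10 * M).
  { set (cq := (1 - K) * K / d ^ 2).
    assert (Eqp : qp = cq * wp) by (unfold qp, cq; field; lra).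
    assert (Hcq0 : 0 <= cq) by (unfold cq; apply Rmult_le_pos; [nra | apply Rlt_le, Rinv_0_lt_compat; nra]).
    assert (Hcqd : cq * d ^ 2 = (1 - K) * K) by (unfold cq; field; lra).
    assert (Hcq : cq <= 1/2) by nra.
    rewrite Eqp. eapply Rle_trans. apply (mul_abs_le cq wp (1/2) (6/10 * M)); auto.
    rewrite Rabs_right; lra. lra. }
  set (D := sum3 (fun k => Dv k k)).
  assert (HD : Rabs D <= 3 * M).
  { unfold D, sum3. eapply Rle_trans. apply abs3; apply HDv; lia. lra. }
  set (S := sum3 (fun k => V k * DL k)).
  assert (HS : Rabs S <= 1/10 * l).
  { unfold S, sum3. eapply Rle_trans.
    apply abs3; (apply mul_abs_le; [apply HV1; lia | apply Rle_refl]). unfold l. lra. }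
  set (U := sum3 (fun k => Dv i k * DL k)).
  assert (HU : Rabs U <= M * l).
  { unfold U, sum3. eapply Rle_trans.
    apply abs3; (apply mul_abs_le; [apply HDv; lia | apply Rle_refl]). unfold l. lra. }
  set (T2 := sum3 (fun k => Dv i k * Dv k j)).
  assert (HT2 : Rabs T2 <= 3 * (M * M)).
  { unfold T2, sum3. eapply Rle_trans.
    apply abs3; (apply mul_abs_le; apply HDv; lia). lra. }
  set (c1 := K / (1 + K)).
  assert (Hc1 : Rabs c1 <= 1/4).
  { assert (E : c1 * (1 + K) = K) by (unfold c1; field; lra).
    assert (0 <= c1) by (unfold c1; apply Rmult_le_pos; [lra | apply Rlt_le, Rinv_0_lt_compat; lra]).
    rewrite Rabs_right; nra. }
  set (c2 := (1 - K) / (1 + K)).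
  assert (Hc2 : Rabs c2 <= 1).
  { assert (E : c2 * (1 + K) = 1 - K) by (unfold c2; field; lra).
    assert (0 <= c2) by (unfold c2; apply Rmult_le_pos; [lra | apply Rlt_le, Rinv_0_lt_compat; lra]).
    rewrite Rabs_right; nra. }
  assert (Hta' : Rabs ta <= W) by (rewrite Rabs_right; lra).
  set (a := Dv i j).
  assert (Ha : Rabs a <= M) by (apply HDv; auto).
  set (Vj := V j).
  assert (HVj : Rabs Vj <= 1/10) by (apply HV1; auto).
  assert (HVjb : Rabs Vj <= Vb) by (apply HVb; auto).
  set (Lj := DL j).
  assert (HLj : Rabs Lj <= l).
  { unfold Lj, l. pose proof (Rabs_pos (DL 0%nat)); pose proof (Rabs_pos (DL 1%nat)); pose proof (Rabs_pos (DL 2%nat)).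
    destruct j as [|[|[|j]]]; try lia; lra. }
  clearbody l w d Q wp qp D S U T2 c1 c2 a Vj Lj.
  match goal with |- Rabs (a * ?X) <= _ =>
    assert (EX : X = c1 * ta * wp * Lj - ta * T2 - ta * qp * Vj * D + ta * (1 - Q) * a * D
                     - ta * c2 * qp * Vj * S + ta * c2 * (1 - Q) * a * S + ta * c2 * (1 - Q) * Vj * U
                     + A * qp * w * Vj + A * Q * wp * Vj + A * Q * w * a) by ring;
    rewrite EX end.
  eapply Rle_trans.
  { apply mul_abs_le. apply Rle_refl.
    repeat first [apply sub_abs_le | apply add_abs_le].
    - apply (mul_abs_le _ _ _ _ (mul_abs_le _ _ _ _ (mul_abs_le _ _ _ _ Hc1 Hta') Hwp6) HLj).
    - apply (mul_abs_le _ _ _ _ Hta' HT2).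
    - apply (mul_abs_le _ _ _ _ (mul_abs_le _ _ _ _ (mul_abs_le _ _ _ _ Hta' Hqp) HVj) HD).
    - apply (mul_abs_le _ _ _ _ (mul_abs_le _ _ _ _ (mul_abs_le _ _ _ _ Hta' HQ1) Ha) HD).
    - apply (mul_abs_le _ _ _ _ (mul_abs_le _ _ _ _ (mul_abs_le _ _ _ _ (mul_abs_le _ _ _ _ Hta' Hc2) Hqp) HVj) HS).
    - apply (mul_abs_le _ _ _ _ (mul_abs_le _ _ _ _ (mul_abs_le _ _ _ _ (mul_abs_le _ _ _ _ Hta' Hc2) HQ1) Ha) HS).
    - apply (mul_abs_le _ _ _ _ (mul_abs_le _ _ _ _ (mul_abs_le _ _ _ _ (mul_abs_le _ _ _ _ Hta' Hc2) HQ1) HVj) HU).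
    - apply (mul_abs_le _ _ _ _ (mul_abs_le _ _ _ _ (mul_abs_le _ _ _ _ HA Hqp) Hw) HVjb).
    - apply (mul_abs_le _ _ _ _ (mul_abs_le _ _ _ _ (mul_abs_le _ _ _ _ HA HQ) HwpV) HVj).
    - apply (mul_abs_le _ _ _ _ (mul_abs_le _ _ _ _ (mul_abs_le _ _ _ _ HA HQ) HwV) Ha). }
  pose proof (Rabs_pos a) as Ha0.
  assert (P1 : 0 <= W * M ^ 2 * (M - Rabs a)) by (apply Rmult_le_pos; [apply Rmult_le_pos; nra | lra]).
  assert (P2 : 0 <= al * W * Vb * M * (M - Rabs a)).
  { apply Rmult_le_pos; [| lra]. repeat apply Rmult_le_pos; lra. }
  assert (P3 : 0 <= W * M * Rabs a * l) by (repeat apply Rmult_le_pos; lra).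
  assert (P4 : 0 <= W * M ^ 3) by (apply Rmult_le_pos; [lra | apply pow_le; lra]).
  assert (P5 : 0 <= al * W * M ^ 2 * Vb) by (repeat apply Rmult_le_pos; try lra; apply pow_le; lra).
  lra.
Qed.

Lemma is_derive_mult' (f g : R -> R) (x df dg : R) :
  is_derive f x df -> is_derive g x dg -> is_derive (fun s => f s * g s) x (df * g x + f x * dg).
Proof.
  intros Hf Hg. exact (@is_derive_mult R_AbsRing f g x df dg Hf Hg (fun n m => Rmult_comm n m)).
Qed.

Lemma is_derive_cmul (f : R -> R) (x df c : R) :
  is_derive f x df -> is_derive (fun s => c * f s) x (c * df).
Proof.
  intros Hf. pose proof (is_derive_mult' (fun _ => c) f x 0 df (is_derive_const c x) Hf) as H.
  simpl in H. replace (c * df) with (0 * f x + c * df) by ring. exact H.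
Qed.

Definition gF (v : vfield) : field := fun t x y z => / 2 * Dvsq v t x y z.
Definition Gk (v : vfield) (k : nat) : field := fun t x y z =>
  sum3 (fun i => sum3 (fun j => dx i (v j) t x y z * dx k (dx i (v j)) t x y z)).
Definition hF (v : vfield) (k : nat) : field := fun t x y z => v k t x y z * gF v t x y z.
Definition dhF (v : vfield) (k : nat) : field := fun t x y z =>
  dx k (v k) t x y z * gF v t x y z + v k t x y z * Gk v k t x y z.

Lemma hderiv t0 t1 v k p :
  (forall k, (k < 3)%nat -> smooth_on t0 t1 (v k)) -> (k < 3)%nat -> t0 < get 0 p < t1 ->
  is_derive (fun s => ap (hF v k) (upd (S k) s p)) (get (S k) p) (ap (dhF v k) p).
Proof.
  intros Hv Hk Hp.
  set (s0 := get (S k) p).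
  assert (Pp : upd (S k) s0 p = p) by apply upd_get.
  assert (Hdom : t0 < get 0 (upd (S k) s0 p) < t1) by (rewrite get0_updS; auto).
  assert (SK : (S k < 4)%nat) by lia.
  assert (D1 : is_derive (fun s => ap (v k) (upd (S k) s p)) s0 (ap (dx k (v k)) p)).
  { pose proof (slice_deriv t0 t1 (v k) (S k) p s0 (Hv k Hk) SK Hdom) as H. rewrite Pp in H. exact H. }
  assert (D2 : forall i j, (i < 3)%nat -> (j < 3)%nat ->
     is_derive (fun s => ap (dx i (v j)) (upd (S k) s p)) s0 (ap (dx k (dx i (v j))) p)).
  { intros i j Hi Hj.
    assert (Sm : smooth_on t0 t1 (dx i (v j))) by (apply smooth_pd; auto; lia).
    pose proof (slice_deriv t0 t1 _ (S k) p s0 Sm SK Hdom) as H. rewrite Pp in H. exact H. }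
  assert (D3 : is_derive (fun s => / 2 * sum3 (fun i => sum3 (fun j => ap (dx i (v j)) (upd (S k) s p) ^ 2))) s0
                 (/ 2 * sum3 (fun i => sum3 (fun j => 2 * ap (dx i (v j)) p * ap (dx k (dx i (v j))) p)))).
  { apply is_derive_cmul. apply (is_derive_sum3 (fun i s => sum3 (fun j => ap (dx i (v j)) (upd (S k) s p) ^ 2))).
    intros i Hi. apply (is_derive_sum3 (fun j s => ap (dx i (v j)) (upd (S k) s p) ^ 2)).
    intros j Hj. pose proof (is_derive_sq _ _ _ (D2 i j Hi Hj)) as H. cbv beta in H. rewrite Pp in H. exact H. }
  pose proof (is_derive_mult' _ _ _ _ _ D1 D3) as H.
  cbv beta in H. rewrite Pp in H.
  match type of H with is_derive _ _ ?l =>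
    assert (E : @eq R l (ap (dhF v k) p)); [| rewrite <- E; exact H] end.
  unfold ap, dhF, gF, Gk, Dvsq, sum3. field.
Qed.

Lemma sum3_ext (f g : nat -> R) : (forall i, (i < 3)%nat -> f i = g i) -> sum3 f = sum3 g.
Proof. intros H. unfold sum3. rewrite (H 0%nat), (H 1%nat), (H 2%nat) by lia. reflexivity. Qed.

Lemma sw t0 t1 F i k t x y z : smooth_on t0 t1 F -> (i < 3)%nat -> (k < 3)%nat -> t0 < t < t1 ->
  dx i (dx k F) t x y z = dx k (dx i F) t x y z.
Proof.
  intros HF Hi Hk Ht. destruct (Nat.eq_dec i k) as [E|E]; [subst; reflexivity|].
  apply (schwarz_ap t0 t1 F (S i) (S k) (t, x, y, z)); auto; lia.
Qed.

Lemma Per_of (F : field) t : periodic F -> Per F t.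
Proof. intros H x y z. apply H. Qed.

Lemma Per_Dvsq t0 t1 v t : (forall k, (k < 3)%nat -> smooth_on t0 t1 (v k) /\ periodic (v k)) ->
  t0 < t < t1 -> Per (Dvsq v) t.
Proof.
  intros Hv Ht. unfold Dvsq.
  apply (Per_sum3 (fun i t x y z => sum3 (fun j => dx i (v j) t x y z ^ 2))). intros i Hi.
  apply (Per_sum3 (fun j t x y z => dx i (v j) t x y z ^ 2)). intros j Hj.
  apply (Per_pow2 (dx i (v j))). apply (per_dx t0 t1); auto. apply Hv; auto.
  apply Per_of. apply Hv; auto.
Qed.

Lemma Good_Dvsq t0 t1 v : (forall k, (k < 3)%nat -> smooth_on t0 t1 (v k)) -> Good t0 t1 (Dvsq v).
Proof.
  intros Hv. unfold Dvsq. apply Good_sum3. intros i Hi. apply Good_sum3. intros j Hj.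
  apply Good_pow2. apply smooth_Good0. apply smooth_pd; auto. lia.
Qed.

Lemma int3_dhF t0 t1 v k t : (forall k, (k < 3)%nat -> smooth_on t0 t1 (v k) /\ periodic (v k)) ->
  (k < 3)%nat -> t0 < t < t1 -> int3 (dhF v k t) = 0.
Proof.
  intros Hvp Hk Ht.
  assert (Hv : forall k, (k < 3)%nat -> smooth_on t0 t1 (v k)) by (intros; apply Hvp; auto).
  assert (Gg : Good t0 t1 (gF v)).
  { unfold gF. apply Good_mult. apply Good_const. apply Good_Dvsq; auto. }
  assert (Gh : Good t0 t1 (hF v k)).
  { unfold hF. apply Good_mult; auto. apply smooth_Good0; auto. }
  assert (Gdh : Good t0 t1 (dhF v k)).
  { unfold dhF, Gk. apply Good_plus; apply Good_mult; auto.
    apply smooth_Good0. apply smooth_pd; auto. lia.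
    apply smooth_Good0; auto.
    apply Good_sum3. intros i Hi. apply Good_sum3. intros j Hj. apply Good_mult.
    apply smooth_Good0. apply smooth_pd; auto. lia.
    apply smooth_Good0. apply smooth_pd; [apply smooth_pd; auto|]; lia. }
  assert (Ph : Per (hF v k) t).
  { apply (Per_mult (v k) (gF v)). apply Per_of. apply Hvp; auto.
    apply (Per_mult (fun _ _ _ _ => / 2) (Dvsq v)). apply Per_const. apply (Per_Dvsq t0 t1); auto. }
  destruct k as [|[|[|k]]]; try lia.
  - apply (int3_dz_x t0 t1 (hF v 0) (dhF v 0) t); auto.
    intros x y z. exact (hderiv t0 t1 v 0 (t, x, y, z) Hv ltac:(lia) Ht).
  - apply (int3_dz_y t0 t1 (hF v 1) (dhF v 1) t); auto.
    intros x y z. exact (hderiv t0 t1 v 1 (t, x, y, z) Hv ltac:(lia) Ht).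
  - apply (int3_dz_z t0 t1 (hF v 2) (dhF v 2) t); auto.
    intros x y z. exact (hderiv t0 t1 v 2 (t, x, y, z) Hv ltac:(lia) Ht).
Qed.

Lemma int3_sum3 t0 t1 (F : nat -> R -> R -> R -> R) : t0 < t1 ->
  (forall k, (k < 3)%nat -> G3 t0 t1 (F k)) ->
  int3 (fun x y z => sum3 (fun k => F k x y z)) = sum3 (fun k => int3 (F k)).
Proof.
  intros H01 HF. unfold sum3.
  rewrite (int3_plus3 t0 t1 (fun x y z => F 0%nat x y z + F 1%nat x y z) (F 2%nat)); auto.
  rewrite (int3_plus3 t0 t1 (F 0%nat) (F 1%nat)); auto.
  all: try (apply HF; lia).
  apply G3_plus; apply HF; lia.
Qed.

Lemma ibp_T t0 t1 v t : (forall k, (k < 3)%nat -> smooth_on t0 t1 (v k) /\ periodic (v k)) ->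
  t0 < t < t1 ->
  int3 (fun x y z => sum3 (fun i => sum3 (fun j => sum3 (fun k =>
     dx i (v j) t x y z * v k t x y z * dx i (dx k (v j)) t x y z)))) =
  - int3 (fun x y z => sum3 (fun k => dx k (v k) t x y z) * gF v t x y z).
Proof.
  intros Hvp Ht.
  assert (Hv : forall k, (k < 3)%nat -> smooth_on t0 t1 (v k)) by (intros; apply Hvp; auto).
  assert (H01 : t0 < t1) by lra.
  assert (GA : forall k, (k < 3)%nat -> G3 t0 t1 (fun x y z => v k t x y z * Gk v k t x y z)).
  { intros k Hk. apply (G3_of t0 t1 (fun t x y z => v k t x y z * Gk v k t x y z)); auto.
    apply Good_mult. apply smooth_Good0; auto. unfold Gk.
    apply Good_sum3. intros i Hi. apply Good_sum3. intros j Hj. apply Good_mult.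
    apply smooth_Good0. apply smooth_pd; auto. lia.
    apply smooth_Good0. apply smooth_pd; [apply smooth_pd; auto|]; lia. }
  assert (GB : forall k, (k < 3)%nat -> G3 t0 t1 (fun x y z => dx k (v k) t x y z * gF v t x y z)).
  { intros k Hk. apply (G3_of t0 t1 (fun t x y z => dx k (v k) t x y z * gF v t x y z)); auto.
    apply Good_mult. apply smooth_Good0; apply smooth_pd; auto; lia.
    unfold gF. apply Good_mult. apply Good_const. apply Good_Dvsq; auto. }
  transitivity (int3 (fun x y z => sum3 (fun k => v k t x y z * Gk v k t x y z))).
  { apply int3_ext. intros x y z.
    transitivity (sum3 (fun k => v k t x y z * sum3 (fun i => sum3 (fun j =>
       dx i (v j) t x y z * dx i (dx k (v j)) t x y z)))).
    { unfold sum3. ring. }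
    apply sum3_ext. intros k Hk. f_equal. unfold Gk. apply sum3_ext. intros i Hi.
    apply sum3_ext. intros j Hj. f_equal. apply (sw t0 t1); auto. }
  transitivity (- int3 (fun x y z => sum3 (fun k => dx k (v k) t x y z * gF v t x y z))).
  2: { f_equal. apply int3_ext. intros x y z. unfold sum3. ring. }
  rewrite (int3_sum3 t0 t1 (fun k x y z => v k t x y z * Gk v k t x y z)); auto.
  rewrite (int3_sum3 t0 t1 (fun k x y z => dx k (v k) t x y z * gF v t x y z)); auto.
  assert (E : forall k, (k < 3)%nat -> int3 (fun x y z => v k t x y z * Gk v k t x y z) =
                 - int3 (fun x y z => dx k (v k) t x y z * gF v t x y z)).
  { intros k Hk. pose proof (int3_dhF t0 t1 v k t Hvp Hk Ht) as Z.
    unfold dhF in Z.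
    rewrite (int3_plus3 t0 t1 (fun x y z => dx k (v k) t x y z * gF v t x y z)
                                (fun x y z => v k t x y z * Gk v k t x y z)) in Z; auto.
    lra. }
  unfold sum3. rewrite !E by lia. ring.
Qed.

Lemma G3_atom t0 t1 F t : Good t0 t1 F -> t0 < t < t1 -> G3 t0 t1 (fun x y z => F t x y z).
Proof. intros; apply Good_freeze; auto. Qed.

Lemma G3_cont3 t0 t1 g t : G3 t0 t1 g -> t0 < t < t1 ->
  forall x y z, continuous (fun q : R * R * R => g (fst (fst q)) (snd (fst q)) (snd q)) (x, y, z).
Proof.
  intros Hg Ht x y z.
  apply (continuous_comp (fun q : R * R * R => (t, fst (fst q), snd (fst q), snd q))
           (fun q : R * R * R * R => ap (fun _ x y z => g x y z) q)).
  - ctup.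
  - apply Hg; auto.
Qed.

Lemma abs_sum3 (f g : nat -> R) : (forall i, (i < 3)%nat -> Rabs (f i) <= g i) -> Rabs (sum3 f) <= sum3 g.
Proof. intros H. unfold sum3. apply abs3; apply H; lia. Qed.

Lemma sum3_nonneg (f : nat -> R) : (forall i, (i < 3)%nat -> 0 <= f i) -> 0 <= sum3 f.
Proof. intros H. unfold sum3. pose proof (H 0%nat ltac:(lia)). pose proof (H 1%nat ltac:(lia)). pose proof (H 2%nat ltac:(lia)). lra. Qed.

Lemma Dvsq_nonneg v t x y z : 0 <= Dvsq v t x y z.
Proof.
  unfold Dvsq. apply sum3_nonneg; intros i Hi. apply sum3_nonneg; intros j Hj. apply pow2_ge_0.
Qed.

Lemma DLsq_nonneg L t x y z : 0 <= DLsq L t x y z.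
Proof. unfold DLsq. apply sum3_nonneg; intros i Hi. apply pow2_ge_0. Qed.

Lemma sq_le_sum3 (f : nat -> R) i : (i < 3)%nat -> f i ^ 2 <= sum3 (fun k => f k ^ 2).
Proof.
  intros Hi. unfold sum3.
  assert (forall a : R, 0 <= a ^ 2) by (intros; nra).
  pose proof (H (f 0%nat)). pose proof (H (f 1%nat)). pose proof (H (f 2%nat)).
  destruct i as [|[|[|i]]]; try lia; lra.
Qed.

Lemma le_sum3 (f : nat -> R) i : (forall k, (k < 3)%nat -> 0 <= f k) -> (i < 3)%nat -> f i <= sum3 f.
Proof.
  intros H Hi. unfold sum3.
  pose proof (H 0%nat ltac:(lia)). pose proof (H 1%nat ltac:(lia)). pose proof (H 2%nat ltac:(lia)).
  destruct i as [|[|[|i]]]; try lia; lra.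
Qed.

Lemma abs_le_sqrt a s : a ^ 2 <= s -> Rabs a <= sqrt s.
Proof.
  intros H. rewrite <- sqrt_Rsqr_abs. apply sqrt_le_1_alt. unfold Rsqr. nra.
Qed.

Lemma Linf_Dv_bound t0 t1 v t : (forall k, (k < 3)%nat -> smooth_on t0 t1 (v k) /\ periodic (v k)) ->
  t0 < t < t1 ->
  (forall i j x y z, (i < 3)%nat -> (j < 3)%nat -> Rabs (dx i (v j) t x y z) <= Linf_Dv v t) /\
  0 <= Linf_Dv v t.
Proof.
  intros Hvp Ht.
  assert (Hv : forall k, (k < 3)%nat -> smooth_on t0 t1 (v k)) by (intros; apply Hvp; auto).
  set (g := fun x y z => sqrt (Dvsq v t x y z)).
  assert (Hb : exists B, forall x y z, Rabs (g x y z) <= B).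
  { apply bounded_per.
    - intros x y z. unfold g.
      apply (continuous_comp (fun q : R * R * R => Dvsq v t (fst (fst q)) (snd (fst q)) (snd q)) sqrt).
      + apply (G3_cont3 t0 t1 (Dvsq v t) t); auto. apply G3_of; auto. apply Good_Dvsq; auto.
      + apply continuous_sqrt.
    - intros x y z. unfold g. destruct (Per_Dvsq t0 t1 v t Hvp Ht x y z) as [A [B C]].
      rewrite A, B, C. auto. }
  assert (Hb' : exists B, forall x y z, g x y z <= B).
  { destruct Hb as [B HB]. exists B. intros x y z. eapply Rle_trans; [apply Rle_abs | apply HB]. }
  destruct (sup3_spec g Hb') as [Hs _].
  split.
  - intros i j x y z Hi Hj. eapply Rle_trans; [| apply (Hs x y z)]. unfold g.
    apply abs_le_sqrt. unfold Dvsq.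
    eapply Rle_trans; [apply (sq_le_sum3 (fun j => dx i (v j) t x y z) j Hj)|].
    apply (le_sum3 (fun i => sum3 (fun j => dx i (v j) t x y z ^ 2)) i); auto.
    intros k Hk. apply sum3_nonneg. intros; apply pow2_ge_0.
  - eapply Rle_trans; [| apply (Hs 0 0 0)]. unfold g. apply sqrt_pos.
Qed.

Lemma Linf_v_bound t0 t1 v t : t0 < t < t1 ->
  (forall t x y z, t0 < t < t1 -> sqrt (vsq v t x y z) < 1/10) ->
  (forall k x y z, (k < 3)%nat -> Rabs (v k t x y z) <= Linf_v v t) /\ 0 <= Linf_v v t.
Proof.
  intros Ht Hsm.
  set (g := fun x y z => sqrt (vsq v t x y z)).
  assert (Hb' : exists B, forall x y z, g x y z <= B).
  { exists (1/10). intros x y z. unfold g. apply Rlt_le. apply Hsm; auto. }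
  destruct (sup3_spec g Hb') as [Hs _].
  split.
  - intros k x y z Hk. eapply Rle_trans; [| apply (Hs x y z)]. unfold g.
    apply abs_le_sqrt. unfold vsq. apply (sq_le_sum3 (fun j => v j t x y z) k Hk).
  - eapply Rle_trans; [| apply (Hs 0 0 0)]. unfold g. apply sqrt_pos.
Qed.

Lemma v_small v t x y z k : sqrt (vsq v t x y z) < 1/10 -> (k < 3)%nat -> Rabs (v k t x y z) <= 1/10.
Proof.
  intros H Hk. apply Rlt_le. eapply Rle_lt_trans; [| exact H].
  apply abs_le_sqrt. unfold vsq. apply (sq_le_sum3 (fun j => v j t x y z) k Hk).
Qed.

Definition X1 (v : vfield) (L : field) (t : R) : R -> R -> R -> R := fun x y z =>
  sum3 (fun i => sum3 (fun j => dx i (v j) t x y z * (1 - vsq v t x y z) * dx i (dx j L) t x y z)).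
Definition X2 (K : R) (v : vfield) (t : R) : R -> R -> R -> R := fun x y z =>
  sum3 (fun i => sum3 (fun j => sum3 (fun k =>
    dx i (v j) t x y z * (1 - (1 - K) / (1 - K * vsq v t x y z)) * v j t x y z * dx i (dx k (v k)) t x y z))).
Definition X3 (K : R) (v : vfield) (L : field) (t : R) : R -> R -> R -> R := fun x y z =>
  sum3 (fun i => sum3 (fun j => sum3 (fun k =>
    dx i (v j) t x y z * (1 - (1 - K) / (1 - K * vsq v t x y z)) * v j t x y z * v k t x y z
      * dx i (dx k L) t x y z))).
Definition Tsum (v : vfield) (t : R) : R -> R -> R -> R := fun x y z =>
  sum3 (fun i => sum3 (fun j => sum3 (fun k =>
     dx i (v j) t x y z * v k t x y z * dx i (dx k (v j)) t x y z))).
Definition Rsum (al K : R) (v : vfield) (L : field) (t : R) : R -> R -> R -> R := fun x y z =>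
  sum3 (fun i => sum3 (fun j => dx i (v j) t x y z *
    RR K (Rpower t (- al)) (al * (1 - 3 * K) / t) (fun k => v k t x y z)
       (fun a b => dx a (v b) t x y z) (fun k => dx k L t x y z) i j)).

Lemma rhs_eq al K v L t : rhs_terms al K v L t =
  - (al * (1 - 3 * K) / t) * int3 (Dvsq v t)
  - K / (1 + K) * Rpower t (- al) * int3 (X1 v L t)
  + Rpower t (- al) * int3 (X2 K v t)
  + Rpower t (- al) * ((1 - K) / (1 + K)) * int3 (X3 K v L t).
Proof. reflexivity. Qed.

Lemma pointwise_id al K t0 t1 v L t x y z :
  0 <= K <= 1/3 ->
  (forall k, (k < 3)%nat -> smooth_on t0 t1 (v k)) -> smooth_on t0 t1 L ->
  is_solution al K t0 t1 v L ->
  (forall t x y z, t0 < t < t1 -> sqrt (vsq v t x y z) < 1/10) ->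
  t0 < t < t1 ->
  / 2 * Hf v t x y z =
   - (al * (1 - 3 * K) / t) * Dvsq v t x y z
   - K / (1 + K) * Rpower t (- al) * X1 v L t x y z
   + Rpower t (- al) * X2 K v t x y z
   + Rpower t (- al) * ((1 - K) / (1 + K)) * X3 K v L t x y z
   - Rpower t (- al) * Tsum v t x y z
   + Rsum al K v L t x y z.
Proof.
  intros HK Hv HL Hs Hsm Ht.
  transitivity (sum3 (fun i => sum3 (fun j => dx i (v j) t x y z * pd 0 (dx i (v j)) t x y z))).
  { unfold Hf, sum3. field. }
  transitivity (sum3 (fun i => sum3 (fun j => dx i (v j) t x y z *
     Efun' al K t (fun k => v k t x y z) (fun k m => dx k (v m) t x y z) (fun k => dx k L t x y z)
       (fun k => dx i (v k) t x y z) (fun k m => dx i (dx k (v m)) t x y z)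
       (fun k => dx i (dx k L) t x y z) j))).
  { apply sum3_ext; intros i Hi; apply sum3_ext; intros j Hj. f_equal.
    transitivity (dx i (pd 0 (v j)) t x y z).
    - exact (schwarz_ap t0 t1 (v j) 0 (S i) (t, x, y, z) (Hv j Hj) ltac:(lia) ltac:(lia) ltac:(lia) Ht).
    - apply (dxE al K t0 t1 v L i j t x y z); auto. }
  unfold sum3.
  rewrite !(Efun'_decomp al K t (fun k => v k t x y z) (fun a b => dx a (v b) t x y z)
     (fun k => dx k L t x y z) (fun a b c => dx a (dx b (v c)) t x y z) (fun a b => dx a (dx b L) t x y z)).
  cbv beta.
  unfold X1, X2, X3, Tsum, Rsum, Dvsq, vsq, sum3. ring.
Qed.

Lemma sum3_le (f g : nat -> R) : (forall i, (i < 3)%nat -> f i <= g i) -> sum3 f <= sum3 g.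
Proof. intros H. unfold sum3. pose proof (H 0%nat ltac:(lia)). pose proof (H 1%nat ltac:(lia)). pose proof (H 2%nat ltac:(lia)). lra. Qed.

Lemma amgm3 M a d0 d1 d2 : 0 <= M ->
  4 * M * Rabs a * (Rabs d0 + Rabs d1 + Rabs d2) <= 6 * M * a ^ 2 + 2 * M * (d0 ^ 2 + d1 ^ 2 + d2 ^ 2).
Proof.
  intros HM.
  rewrite <- (pow2_abs a), <- (pow2_abs d0), <- (pow2_abs d1), <- (pow2_abs d2).
  assert (forall u w : R, 2 * u * w <= u ^ 2 + w ^ 2) by (intros u w; pose proof (pow2_ge_0 (u - w)); nra).
  pose proof (H (Rabs a) (Rabs d0)). pose proof (H (Rabs a) (Rabs d1)). pose proof (H (Rabs a) (Rabs d2)).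
  nra.
Qed.

Lemma int3_affine t0 t1 f g c0 c1 c2 : t0 < t1 -> G3 t0 t1 f -> G3 t0 t1 g ->
  int3 (fun x y z => c0 + c1 * f x y z + c2 * g x y z) = c0 + c1 * int3 f + c2 * int3 g.
Proof.
  intros H01 Hf Hg.
  assert (C : forall c f, G3 t0 t1 f -> G3 t0 t1 (fun x y z => c * f x y z)).
  { intros c h Hh. apply G3_mult; auto. apply G3_const. }
  assert (S1 : G3 t0 t1 (fun x y z => c0 + c1 * f x y z)).
  { apply G3_plus. apply G3_const. apply C; exact Hf. }
  rewrite (int3_plus3 t0 t1 _ _ H01 S1 (C c2 g Hg)).
  rewrite (int3_plus3 t0 t1 (fun _ _ _ => c0) _ H01 (G3_const t0 t1 c0) (C c1 f Hf)).
  rewrite int3_const, (int3_scal3 t0 t1 f c1 H01 Hf), (int3_scal3 t0 t1 g c2 H01 Hg).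
  reflexivity.
Qed.

Lemma int3_comb6 t0 t1 f1 f2 f3 f4 f5 f6 a1 a2 a3 a4 a5 : t0 < t1 ->
  G3 t0 t1 f1 -> G3 t0 t1 f2 -> G3 t0 t1 f3 -> G3 t0 t1 f4 -> G3 t0 t1 f5 -> G3 t0 t1 f6 ->
  int3 (fun x y z => a1 * f1 x y z + a2 * f2 x y z + a3 * f3 x y z + a4 * f4 x y z + a5 * f5 x y z + f6 x y z)
  = a1 * int3 f1 + a2 * int3 f2 + a3 * int3 f3 + a4 * int3 f4 + a5 * int3 f5 + int3 f6.
Proof.
  intros H01 G1 G2 G3' G4 G5 G6.
  assert (C : forall c f, G3 t0 t1 f -> G3 t0 t1 (fun x y z => c * f x y z)).
  { intros c h Hh. apply G3_mult; auto. apply G3_const. }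
  assert (S2 : G3 t0 t1 (fun x y z => a1 * f1 x y z + a2 * f2 x y z)).
  { apply G3_plus; apply C; assumption. }
  assert (S3 : G3 t0 t1 (fun x y z => a1 * f1 x y z + a2 * f2 x y z + a3 * f3 x y z)).
  { apply G3_plus; [exact S2 | apply C; assumption]. }
  assert (S4 : G3 t0 t1 (fun x y z => a1 * f1 x y z + a2 * f2 x y z + a3 * f3 x y z + a4 * f4 x y z)).
  { apply G3_plus; [exact S3 | apply C; assumption]. }
  assert (S5 : G3 t0 t1 (fun x y z => a1 * f1 x y z + a2 * f2 x y z + a3 * f3 x y z + a4 * f4 x y z + a5 * f5 x y z)).
  { apply G3_plus; [exact S4 | apply C; assumption]. }
  rewrite (int3_plus3 t0 t1 _ _ H01 S5 G6).
  rewrite (int3_plus3 t0 t1 _ _ H01 S4 (C a5 f5 G5)).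
  rewrite (int3_plus3 t0 t1 _ _ H01 S3 (C a4 f4 G4)).
  rewrite (int3_plus3 t0 t1 _ _ H01 S2 (C a3 f3 G3')).
  rewrite (int3_plus3 t0 t1 _ _ H01 (C a1 f1 G1) (C a2 f2 G2)).
  rewrite (int3_scal3 t0 t1 f1 a1 H01 G1), (int3_scal3 t0 t1 f2 a2 H01 G2), (int3_scal3 t0 t1 f3 a3 H01 G3'),
    (int3_scal3 t0 t1 f4 a4 H01 G4), (int3_scal3 t0 t1 f5 a5 H01 G5).
  reflexivity.
Qed.

Ltac solve_sm Hv HL :=
  match goal with
  | |- smooth_on _ _ (pd _ _) => apply smooth_pd; [solve_sm Hv HL | lia]
  | |- smooth_on _ _ (dx _ _) => apply smooth_pd; [solve_sm Hv HL | lia]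
  | |- _ => first [exact HL | apply Hv; lia]
  end.

Ltac g3 Hv HL Ht Hne :=
  first [ exact (G3_const _ _ _)
        | lazymatch goal with
  | |- G3 _ _ (fun x y z => sum3 _) => apply G3_sum3; intros ? ?; g3 Hv HL Ht Hne
  | |- G3 _ _ (fun x y z => _ - _) => apply G3_minus; g3 Hv HL Ht Hne
  | |- G3 _ _ (fun x y z => _ + _) => apply G3_plus; g3 Hv HL Ht Hne
  | |- G3 _ _ (fun x y z => _ / _) =>
      apply G3_div; [g3 Hv HL Ht Hne | g3 Hv HL Ht Hne
                    | intros ? ? ?; first [apply Hne | apply pow_nonzero; apply Hne]]
  | |- G3 _ _ (fun x y z => _ * _) => apply G3_mult; g3 Hv HL Ht Hne
  | |- G3 _ _ (fun x y z => - _) => apply G3_opp; g3 Hv HL Ht Hne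
  | |- G3 _ _ (fun x y z => _ ^ 2) => apply G3_pow2; g3 Hv HL Ht Hne
  | |- G3 _ _ (fun x y z => ?F ?t x y z) =>
      apply (G3_atom _ _ F t); [apply smooth_Good0; solve_sm Hv HL | exact Ht]
  | |- G3 _ _ (?F ?t) =>
      apply (G3_atom _ _ F t); [apply smooth_Good0; solve_sm Hv HL | exact Ht]
  | |- ?g => idtac "FAIL" g; fail
  end ].

Local Opaque G3.

Lemma test_g3 al K t0 t1 v L t :
  (forall k, (k < 3)%nat -> smooth_on t0 t1 (v k)) -> smooth_on t0 t1 L -> t0 < t < t1 ->
  (forall x y z, 1 - K * sum3 (fun j => v j t x y z ^ 2) <> 0) ->
  G3 t0 t1 (X2 K v t) /\ G3 t0 t1 (Rsum al K v L t) /\ G3 t0 t1 (Hf v t) /\ G3 t0 t1 (X3 K v L t)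
  /\ G3 t0 t1 (X1 v L t) /\ G3 t0 t1 (Tsum v t) /\ G3 t0 t1 (DLsq L t) /\ G3 t0 t1 (Dvsq v t)
  /\ G3 t0 t1 (fun x y z => sum3 (fun k => dx k (v k) t x y z) * gF v t x y z).
Proof.
  intros Hv HL Ht Hne.
  split; [|split; [|split; [|split; [|split; [|split; [|split; [|split]]]]]]].
  - unfold X2, vsq. g3 Hv HL Ht Hne.
  - unfold Rsum, RR. cbv beta zeta. g3 Hv HL Ht Hne.
  - unfold Hf. g3 Hv HL Ht Hne.
  - unfold X3, vsq. g3 Hv HL Ht Hne.
  - unfold X1, vsq. g3 Hv HL Ht Hne.
  - unfold Tsum. g3 Hv HL Ht Hne.
  - unfold DLsq. g3 Hv HL Ht Hne.
  - unfold Dvsq. g3 Hv HL Ht Hne.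
  - unfold gF, Dvsq. g3 Hv HL Ht Hne.
Qed.

Lemma eval4_p a b c d :
  eval4 ((1, (0, 0, 0, 3)%nat) :: (1, (0, 2, 0, 1)%nat) :: (1, (2, 0, 0, 1)%nat) :: (1, (0, 0, 1, 2)%nat) :: nil) a b c d
  = d ^ 3 + b ^ 2 * d + a ^ 2 * d + c * d ^ 2.
Proof. unfold eval4. simpl. ring. Qed.

Lemma int3_nonneg t0 t1 g : t0 < t1 -> G3 t0 t1 g -> (forall x y z, 0 <= g x y z) -> 0 <= int3 g.
Proof.
  intros H01 Hg H. rewrite <- (int3_const 0). apply (int3_le3 t0 t1); auto. apply G3_const.
Qed.

Lemma sqrt_sq x : 0 <= x -> sqrt x ^ 2 = x.
Proof. intros H. rewrite <- (Rsqr_sqrt x H) at 2. unfold Rsqr. ring. Qed.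

Theorem lemma4p4 (al K : R) (Hal : 0 < al) (HK : 0 <= K <= 1 / 3) :
  exists (C : R) (p : poly4), lowdeg_ge3 p /\
  forall (t0 t1 : R) (v : vfield) (L : field),
    1 <= t0 -> t0 < t1 ->
    (forall i, (i < 3)%nat -> smooth_on t0 t1 (v i) /\ periodic (v i)) ->
    smooth_on t0 t1 L -> periodic L ->
    (forall t x y z, t0 < t < t1 -> sqrt (vsq v t x y z) < 1 / 10) ->
    is_solution al K t0 t1 v L ->
    exists f : R -> R,
      forall t, t0 < t < t1 ->
        is_derive (energy v) t (rhs_terms al K v L t + f t) /\
        Rabs (f t) <= C * ((1 + Rpower t (1 - al)) / t) *
          eval4 p (L2_DL L t) (L2_Dv v t) (Linf_v v t) (Linf_Dv v t).
Proof.
  exists (82 + 27 * al).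
  exists ((1, (0, 0, 0, 3)%nat) :: (1, (0, 2, 0, 1)%nat) :: (1, (2, 0, 0, 1)%nat) :: (1, (0, 0, 1, 2)%nat) :: nil).
  split.
  { unfold lowdeg_ge3. repeat apply Forall_cons; try apply Forall_nil; simpl; lia. }
  intros t0 t1 v L Ht0 H01 Hvp HL HpL Hsm Hsol.
  assert (Hv : forall k, (k < 3)%nat -> smooth_on t0 t1 (v k)) by (intros; apply Hvp; auto).
  exists (fun t => / 2 * int3 (Hf v t) - rhs_terms al K v L t).
  intros t Ht. split.
  { replace (rhs_terms al K v L t + (/ 2 * int3 (Hf v t) - rhs_terms al K v L t)) with (/ 2 * int3 (Hf v t)) by ring.
    apply (energy_deriv t0 t1); auto. }
  assert (Htp : 0 < t) by lra.
  assert (H01' : t0 < t1) by lra.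
  assert (Hne : forall x y z, 1 - K * sum3 (fun j => v j t x y z ^ 2) <> 0).
  { intros x y z. apply (vsq_small_ne v t x y z K); auto. }
  destruct (test_g3 al K t0 t1 v L t Hv HL Ht Hne) as [GX2 [GR [GHf [GX3 [GX1 [GT [GDL [GDv GDg]]]]]]]].
  set (Dg := fun x y z => sum3 (fun k => dx k (v k) t x y z) * gF v t x y z) in GDg.
  assert (E1 : / 2 * int3 (Hf v t) = int3 (fun x y z =>
       (- (al * (1 - 3 * K) / t)) * Dvsq v t x y z + (- (K / (1 + K) * Rpower t (- al))) * X1 v L t x y z
       + Rpower t (- al) * X2 K v t x y z + (Rpower t (- al) * ((1 - K) / (1 + K))) * X3 K v L t x y z
       + (- Rpower t (- al)) * Tsum v t x y z + Rsum al K v L t x y z)).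
  { rewrite <- (int3_scal3 t0 t1 (Hf v t) (/ 2) H01' GHf). apply int3_ext. intros x y z.
    rewrite (pointwise_id al K t0 t1 v L t x y z); auto. ring. }
  assert (ET : int3 (Tsum v t) = - int3 Dg) by exact (ibp_T t0 t1 v t Hvp Ht).
  assert (Ef : / 2 * int3 (Hf v t) - rhs_terms al K v L t = Rpower t (- al) * int3 Dg + int3 (Rsum al K v L t)).
  { rewrite rhs_eq, E1.
    rewrite (int3_comb6 t0 t1 (Dvsq v t) (X1 v L t) (X2 K v t) (X3 K v L t) (Tsum v t) (Rsum al K v L t)); auto.
    rewrite ET. ring. }
  rewrite Ef.
  destruct (Linf_Dv_bound t0 t1 v t Hvp Ht) as [HM HM0].
  destruct (Linf_v_bound t0 t1 v t Ht Hsm) as [HVb HVb0].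
  set (M := Linf_Dv v t) in *. set (Vb := Linf_v v t) in *.
  set (W := (1 + Rpower t (1 - al)) / t).
  assert (Hta0 : 0 < Rpower t (- al)) by (unfold Rpower; apply exp_pos).
  assert (EW : W = / t + Rpower t (- al)).
  { unfold W. replace (1 - al) with (1 + - al) by ring. rewrite Rpower_plus, Rpower_1 by auto. field. lra. }
  assert (Hit : 0 < / t) by (apply Rinv_0_lt_compat; auto).
  assert (Hta : 0 <= Rpower t (- al) <= W) by (rewrite EW; lra).
  assert (HA : Rabs (al * (1 - 3 * K) / t) <= al * W).
  { rewrite Rabs_right.
    - rewrite EW. unfold Rdiv. assert (0 <= al * Rpower t (- al)) by nra.
      assert (al * (1 - 3 * K) * / t <= al * / t) by (apply Rmult_le_compat_r; nra). nra.
    - unfold Rdiv. apply Rle_ge. apply Rmult_le_pos; [nra | lra]. }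
  assert (HW0 : 0 <= W) by lra.
  assert (HV1 : forall k x y z, (k < 3)%nat -> Rabs (v k t x y z) <= 1/10).
  { intros k x y z Hk. apply v_small; auto. }
  assert (GB : G3 t0 t1 (fun x y z => W * (72 * M ^ 3 + 27 * al * M ^ 2 * Vb) + 6 * W * M * Dvsq v t x y z
                                      + 18 * W * M * DLsq L t x y z)).
  { apply G3_plus; [apply G3_plus|]; try apply G3_mult; try apply G3_const; auto. }
  assert (BR : Rabs (int3 (Rsum al K v L t)) <=
               W * (72 * M ^ 3 + 27 * al * M ^ 2 * Vb) + 6 * W * M * int3 (Dvsq v t) + 18 * W * M * int3 (DLsq L t)).
  { rewrite <- (int3_affine t0 t1 (Dvsq v t) (DLsq L t)); auto.
    apply (int3_abs3 t0 t1); auto.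
    intros x y z. unfold Rsum.
    eapply Rle_trans.
    { apply abs_sum3; intros i Hi. apply abs_sum3; intros j Hj.
      apply (RR_bound K al (Rpower t (- al)) (al * (1 - 3 * K) / t) W M Vb (fun k => v k t x y z)
               (fun a b => dx a (v b) t x y z) (fun k => dx k L t x y z) i j); auto. }
    cbv beta.
    eapply Rle_trans.
    { apply sum3_le; intros i Hi. apply sum3_le; intros j Hj.
      pose proof (amgm3 M (dx i (v j) t x y z) (dx 0 L t x y z) (dx 1 L t x y z) (dx 2 L t x y z) HM0) as Hg.
      apply (Rmult_le_compat_l W _ _ HW0) in Hg.
      instantiate (1 := fun j => W * (8 * M ^ 3 + 3 * al * M ^ 2 * Vb) + 6 * W * M * dx i (v j) t x y z ^ 2
                                 + 2 * W * M * (dx 0 L t x y z ^ 2 + dx 1 L t x y z ^ 2 + dx 2 L t x y z ^ 2)).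
      cbv beta. nra. }
    unfold Dvsq, DLsq, sum3. right. ring. }
  assert (GB2 : G3 t0 t1 (fun x y z => 0 + 3 / 2 * M * Dvsq v t x y z + 0 * DLsq L t x y z)).
  { apply G3_plus; [apply G3_plus|]; try apply G3_mult; try apply G3_const; auto. }
  assert (BD : Rabs (int3 Dg) <= 3 / 2 * M * int3 (Dvsq v t)).
  { replace (3 / 2 * M * int3 (Dvsq v t)) with (0 + 3 / 2 * M * int3 (Dvsq v t) + 0 * int3 (DLsq L t)) by ring.
    rewrite <- (int3_affine t0 t1 (Dvsq v t) (DLsq L t)); auto.
    apply (int3_abs3 t0 t1); auto.
    intros x y z. unfold Dg, gF. rewrite Rabs_mult.
    assert (H1 : Rabs (sum3 (fun k => dx k (v k) t x y z)) <= 3 * M).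
    { unfold sum3. eapply Rle_trans. apply abs3; apply HM; lia. lra. }
    pose proof (Dvsq_nonneg v t x y z) as H2.
    rewrite (Rabs_right (/ 2 * Dvsq v t x y z)) by nra.
    pose proof (Rabs_pos (sum3 (fun k => dx k (v k) t x y z))). nra. }
  assert (I1 : int3 (Dvsq v t) = L2_Dv v t ^ 2).
  { unfold L2_Dv. rewrite sqrt_sq; auto. apply (int3_nonneg t0 t1); auto. intros; apply Dvsq_nonneg. }
  assert (I2 : int3 (DLsq L t) = L2_DL L t ^ 2).
  { unfold L2_DL. rewrite sqrt_sq; auto. apply (int3_nonneg t0 t1); auto. intros; apply DLsq_nonneg. }
  rewrite I1 in BR, BD. rewrite I2 in BR.
  rewrite eval4_p. fold W.
  set (A := L2_DL L t) in *. set (B := L2_Dv v t) in *.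
  assert (Hfin : Rabs (Rpower t (- al) * int3 Dg + int3 (Rsum al K v L t)) <=
                 W * (3 / 2 * M * B ^ 2) + (W * (72 * M ^ 3 + 27 * al * M ^ 2 * Vb) + 6 * W * M * B ^ 2 + 18 * W * M * A ^ 2)).
  { eapply Rle_trans; [apply Rabs_triang|]. rewrite Rabs_mult, (Rabs_right (Rpower t (- al))) by lra.
    apply Rplus_le_compat; auto.
    eapply Rle_trans. apply Rmult_le_compat_l; [lra | exact BD].
    apply Rmult_le_compat_r; [| lra].
    pose proof (pow2_ge_0 B). nra. }
  eapply Rle_trans; [exact Hfin|].
  assert (P1 : 0 <= W * M ^ 3) by (apply Rmult_le_pos; [lra | apply pow_le; lra]).
  assert (P2 : 0 <= W * (B ^ 2 * M)) by (apply Rmult_le_pos; [lra | apply Rmult_le_pos; [apply pow2_ge_0 | lra]]).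
  assert (P3 : 0 <= W * (A ^ 2 * M)) by (apply Rmult_le_pos; [lra | apply Rmult_le_pos; [apply pow2_ge_0 | lra]]).
  assert (P4 : 0 <= W * (Vb * M ^ 2)) by (apply Rmult_le_pos; [lra | apply Rmult_le_pos; [lra | apply pow2_ge_0]]).
  assert (P5 : 0 <= al * (W * M ^ 3)) by (apply Rmult_le_pos; lra).
  assert (P6 : 0 <= al * (W * (B ^ 2 * M))) by (apply Rmult_le_pos; lra).
  assert (P7 : 0 <= al * (W * (A ^ 2 * M))) by (apply Rmult_le_pos; lra).
  assert (P8 : 0 <= al * (W * (Vb * M ^ 2))) by (apply Rmult_le_pos; lra).
  nra.
Qed.
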